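(* Let $X$ be a Banach space, $\Omega\in L(X)$ an isomorphism of $X$ onto itself, $\tau>0$ and $f\in C^{0}([0,\infty),X)$. Then the unique classical solution of $$\ddot x(t)-\Omega^{2}x(t-2\tau)=f(t)\ (t\ge0),\qquad x(t)=0\ (t\in[-2\tau,0])$$ is given by $x(t)=\int_{0}^{t}x_2(t-s;\Omega)f(s)\,ds$ for $t\ge0$ (and $x(t)=0$ for $t\in[-2\tau,0]$).
   Context: For $A\in L(X)$, $\exp_\tau(t;A)=0$ for $t<-\tau$, $=\mathrm{id}_X$ for $-\tau\le t<0$, and $=\sum_{j=0}^{k}A^{j}\frac{(t-(j-1)\tau)^{j}}{j!}$ for $(k-1)\tau\le t<k\tau$, $k\in\mathbb N$. For $t\in\mathbb R$, $x_2(t;\Omega):=\tfrac12\Omega^{-1}(\exp_\tau(t;\Omega)-\exp_\tau(t;-\Omega))$; in particular $x_2(t;\Omega)=0$ for $t<0$. A classical solution is a function $x\in C^{1}([-2\tau,\infty),X)\cap C^{2}([-2\tau,0],X)\cap C^{2}([0,\infty),X)$ (one-sided derivatives at endpoints) satisfying the equations pointwise. *)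

(* Defs.v *)
From Stdlib Require Import Reals Lra Lia ZArith.
Open Scope R_scope.

Record Banach := {
  B :> Type;
  bzero : B;
  badd : B -> B -> B;
  bopp : B -> B;
  bscal : R -> B -> B;
  bnorm : B -> R;
  badd_assoc : forall x y z, badd x (badd y z) = badd (badd x y) z;
  badd_comm : forall x y, badd x y = badd y x;
  badd_0 : forall x, badd x bzero = x;
  badd_opp : forall x, badd x (bopp x) = bzero;
  bscal_assoc : forall a b x, bscal a (bscal b x) = bscal (a * b) x;
  bscal_1 : forall x, bscal 1 x = x;
  bscal_distr_l : forall a x y, bscal a (badd x y) = badd (bscal a x) (bscal a y);
  bscal_distr_r : forall a b x, bscal (a + b) x = badd (bscal a x) (bscal b x);
  bnorm_eq0 : forall x, bnorm x = 0 -> x = bzero;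
  bnorm_scal : forall a x, bnorm (bscal a x) = Rabs a * bnorm x;
  bnorm_triangle : forall x y, bnorm (badd x y) <= bnorm x + bnorm y;
  bcomplete : forall u : nat -> B,
    (forall eps, eps > 0 -> exists N, forall m n, (m >= N)%nat -> (n >= N)%nat ->
        bnorm (badd (u m) (bopp (u n))) < eps) ->
    exists l, forall eps, eps > 0 -> exists N, forall n, (n >= N)%nat ->
        bnorm (badd (u n) (bopp l)) < eps
}.

Arguments bzero {_}. Arguments badd {_}. Arguments bopp {_}.
Arguments bscal {_}. Arguments bnorm {_}.

Definition bsub {X : Banach} (x y : X) : X := badd x (bopp y).

Fixpoint bsum {X : Banach} (n : nat) (g : nat -> X) : X :=
  match n with
  | O => bzero
  | S m => badd (bsum m g) (g m)
  end.

Definition blinear {X : Banach} (A : X -> X) : Prop :=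
  (forall x y, A (badd x y) = badd (A x) (A y)) /\
  (forall a x, A (bscal a x) = bscal a (A x)).
Definition bbounded {X : Banach} (A : X -> X) : Prop :=
  exists C, forall x, bnorm (A x) <= C * bnorm x.

Fixpoint opow {X : Banach} (A : X -> X) (j : nat) : X -> X :=
  match j with
  | O => fun x => x
  | S i => fun x => A (opow A i x)
  end.

Definition lim_in {X : Banach} (g : R -> X) (D : R -> Prop) (t0 : R) (l : X) : Prop :=
  forall eps, eps > 0 -> exists delta, delta > 0 /\
    forall s, D s -> s <> t0 -> Rabs (s - t0) < delta -> bnorm (bsub (g s) l) < eps.

Definition cont_on {X : Banach} (g : R -> X) (D : R -> Prop) : Prop :=
  forall t, D t -> lim_in g D t (g t).

Definition deriv_on {X : Banach} (g : R -> X) (D : R -> Prop) (g' : R -> X) : Prop :=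
  forall t, D t -> lim_in (fun s => bscal (/ (s - t)) (bsub (g s) (g t))) D t (g' t).

Definition is_RInt {X : Banach} (g : R -> X) (a b : R) (I : X) : Prop :=
  forall eps, eps > 0 -> exists delta, delta > 0 /\
    forall (n : nat) (p xi : nat -> R),
      p O = a -> p n = b ->
      (forall k, (k < n)%nat -> p k <= xi k <= p (S k) /\ p (S k) - p k < delta) ->
      bnorm (bsub (bsum n (fun k => bscal (p (S k) - p k) (g (xi k)))) I) < eps.

(** exp_tau(t; A) applied to a vector x. For (k-1)tau <= t < k tau, k = floor(t/tau)+1. *)
Definition exp_tau {X : Banach} (tau : R) (A : X -> X) (t : R) (x : X) : X :=
  if Rlt_dec t (- tau) then bzero
  else if Rlt_dec t 0 then x
  else let k := Z.to_nat (Int_part (t / tau) + 1) in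
       bsum (S k) (fun j => bscal ((t - (INR j - 1) * tau) ^ j / INR (fact j)) (opow A j x)).

Definition x2 {X : Banach} (tau : R) (Om Ominv : X -> X) (t : R) (y : X) : X :=
  bscal (1 / 2) (Ominv (bsub (exp_tau tau Om t y) (exp_tau tau (fun z => bopp (Om z)) t y))).

(** Classical solution of  x''(t) - Om^2 x(t - 2 tau) = f(t) (t >= 0),
    x = 0 on [-2tau, 0]:  x in C^1([-2tau,oo)) /\ C^2([-2tau,0]) /\ C^2([0,oo)). *)
Definition classical_solution {X : Banach} (tau : R) (Om : X -> X) (f : R -> X)
    (x : R -> X) : Prop :=
  let I := fun t => - 2 * tau <= t in
  let Ineg := fun t => - 2 * tau <= t <= 0 in
  let Ipos := fun t => 0 <= t in
  exists x1 x2neg x2pos : R -> X,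
    deriv_on x I x1 /\ cont_on x1 I /\
    deriv_on x1 Ineg x2neg /\ cont_on x2neg Ineg /\
    deriv_on x1 Ipos x2pos /\ cont_on x2pos Ipos /\
    (forall t, 0 <= t -> bsub (x2pos t) (Om (Om (x (t - 2 * tau)))) = f t) /\
    (forall t, Ineg t -> x t = bzero).

(* Main.v *)
Require Import Defs.
From Stdlib Require Import Reals.
From Stdlib Require Import Lra Lia ZArith Classical ClassicalEpsilon.
Open Scope R_scope.


Arguments badd_assoc {_}. Arguments badd_comm {_}. Arguments badd_0 {_}.
Arguments badd_opp {_}. Arguments bscal_assoc {_}. Arguments bscal_1 {_}.
Arguments bscal_distr_l {_}. Arguments bscal_distr_r {_}. Arguments bnorm_eq0 {_}.
Arguments bnorm_scal {_}. Arguments bnorm_triangle {_}. Arguments bcomplete {_}.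

Lemma badd_0l {X : Banach} (x : X) : badd bzero x = x.
Proof. rewrite badd_comm; apply badd_0. Qed.

Lemma badd_cancel_l {X : Banach} (x y z : X) : badd x y = badd x z -> y = z.
Proof.
  intros H.
  assert (badd (bopp x) (badd x y) = badd (bopp x) (badd x z)) by now rewrite H.
  rewrite !badd_assoc, (badd_comm (bopp x) x), badd_opp, !badd_0l in H0. exact H0.
Qed.

Lemma bscal_0 {X : Banach} (x : X) : bscal 0 x = bzero.
Proof.
  apply (badd_cancel_l (bscal 0 x)). rewrite badd_0, <- bscal_distr_r.
  now rewrite Rplus_0_r.
Qed.

Lemma bscal_zero {X : Banach} (a : R) : bscal a (@bzero X) = bzero.
Proof.
  rewrite <- (bscal_0 bzero), bscal_assoc. now rewrite Rmult_0_r.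
Qed.

Lemma bopp_scal {X : Banach} (x : X) : bopp x = bscal (-1) x.
Proof.
  apply (badd_cancel_l x). rewrite badd_opp.
  assert (E : badd (bscal 1 x) (bscal (-1) x) = bzero).
  { rewrite <- bscal_distr_r. replace (1 + -1) with 0 by ring. now rewrite bscal_0. }
  rewrite bscal_1 in E. auto.
Qed.

Lemma bopp_opp {X : Banach} (x : X) : bopp (bopp x) = x.
Proof. rewrite !bopp_scal, bscal_assoc. replace (-1 * -1) with 1 by ring. apply bscal_1. Qed.

Lemma bopp_add {X : Banach} (x y : X) : bopp (badd x y) = badd (bopp x) (bopp y).
Proof. rewrite !bopp_scal. apply bscal_distr_l. Qed.

Lemma bopp_zero {X : Banach} : bopp (@bzero X) = bzero.
Proof. rewrite bopp_scal. apply bscal_zero. Qed.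

Lemma bopp_scal_comm {X : Banach} a (x : X) : bopp (bscal a x) = bscal (-a) x.
Proof. rewrite bopp_scal, bscal_assoc. f_equal; ring. Qed.

Lemma bscal_opp {X : Banach} a (x : X) : bscal a (bopp x) = bscal (-a) x.
Proof. rewrite bopp_scal, bscal_assoc. f_equal; ring. Qed.

Lemma bnorm_zero {X : Banach} : bnorm (@bzero X) = 0.
Proof. rewrite <- (bscal_0 bzero), bnorm_scal, Rabs_R0. ring. Qed.

Lemma bnorm_opp {X : Banach} (x : X) : bnorm (bopp x) = bnorm x.
Proof. rewrite bopp_scal, bnorm_scal. replace (Rabs (-1)) with 1. ring. rewrite Rabs_left; lra. Qed.

Lemma bnorm_nonneg {X : Banach} (x : X) : 0 <= bnorm x.
Proof.
  pose proof (bnorm_triangle x (bopp x)). rewrite badd_opp, bnorm_zero, bnorm_opp in H. lra.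
Qed.

Lemma bsub_diag {X : Banach} (x : X) : bsub x x = bzero.
Proof. apply badd_opp. Qed.

Lemma bsub_0r {X : Banach} (x : X) : bsub x bzero = x.
Proof. unfold bsub. rewrite bopp_zero. apply badd_0. Qed.

Lemma bnorm_sub_sym {X : Banach} (x y : X) : bnorm (bsub x y) = bnorm (bsub y x).
Proof.
  rewrite <- bnorm_opp. unfold bsub. rewrite bopp_add, bopp_opp, badd_comm. reflexivity.
Qed.

Lemma bsub_add_cancel {X : Banach} (x y : X) : badd (bsub x y) y = x.
Proof. unfold bsub. rewrite <- badd_assoc, (badd_comm (bopp y)), badd_opp. apply badd_0. Qed.

Lemma badd_sub_cancel {X : Banach} (x y : X) : bsub (badd x y) y = x.
Proof. unfold bsub. rewrite <- badd_assoc, badd_opp. apply badd_0. Qed.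

Lemma badd_swap {X : Banach} (a b c d : X) :
  badd (badd a b) (badd c d) = badd (badd a c) (badd b d).
Proof.
  rewrite !badd_assoc. f_equal.
  rewrite <- !badd_assoc. f_equal. apply badd_comm.
Qed.

Lemma bsub_add_add {X : Banach} (a b c d : X) :
  bsub (badd a b) (badd c d) = badd (bsub a c) (bsub b d).
Proof.
  unfold bsub. rewrite bopp_add. rewrite !badd_assoc. f_equal.
  rewrite <- !badd_assoc. f_equal. apply badd_comm.
Qed.

Lemma bsub_sub_sub {X : Banach} (a b c d : X) :
  bsub (bsub a b) (bsub c d) = bsub (bsub a c) (bsub b d).
Proof. unfold bsub. rewrite !bopp_add, bopp_opp. apply badd_swap. Qed.

Lemma bsub_triangle {X : Banach} (x y z : X) :
  bnorm (bsub x z) <= bnorm (bsub x y) + bnorm (bsub y z).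
Proof.
  replace (bsub x z) with (badd (bsub x y) (bsub y z)). apply bnorm_triangle.
  unfold bsub. rewrite <- badd_assoc, (badd_assoc (bopp y)), (badd_comm (bopp y) y), badd_opp, badd_0l.
  reflexivity.
Qed.

Lemma bscal_sub {X : Banach} a (x y : X) : bscal a (bsub x y) = bsub (bscal a x) (bscal a y).
Proof. unfold bsub. rewrite bscal_distr_l, bscal_opp, bopp_scal_comm. reflexivity. Qed.

Lemma bscal_sub_r {X : Banach} a b (x : X) : bscal (a - b) x = bsub (bscal a x) (bscal b x).
Proof. unfold bsub, Rminus. rewrite bscal_distr_r, bopp_scal_comm. reflexivity. Qed.

Lemma bnorm_eq0_sub {X : Banach} (x y : X) : bnorm (bsub x y) = 0 -> x = y.
Proof.
  intros H. apply bnorm_eq0 in H. rewrite <- (bsub_add_cancel x y), H. apply badd_0l.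
Qed.

Lemma bnorm_small_eq {X : Banach} (x y : X) :
  (forall eps, eps > 0 -> bnorm (bsub x y) < eps) -> x = y.
Proof.
  intros H. apply bnorm_eq0_sub. pose proof (bnorm_nonneg (bsub x y)).
  destruct (Req_dec (bnorm (bsub x y)) 0); auto.
  specialize (H (bnorm (bsub x y))). lra.
Qed.

Lemma bnorm_le_eps {X : Banach} (x : X) c :
  (forall eps, eps > 0 -> bnorm x <= c + eps) -> bnorm x <= c.
Proof.
  intros H. destruct (Rle_dec (bnorm x) c); auto.
  specialize (H ((bnorm x - c)/2)). lra.
Qed.

Lemma blin_zero {X : Banach} (A : X -> X) : blinear A -> A bzero = bzero.
Proof. intros [H1 H2]. rewrite <- (bscal_0 bzero), H2. rewrite !bscal_0. reflexivity. Qed.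

Lemma blin_opp {X : Banach} (A : X -> X) x : blinear A -> A (bopp x) = bopp (A x).
Proof. intros [H1 H2]. rewrite !bopp_scal. apply H2. Qed.

Lemma blin_sub {X : Banach} (A : X -> X) x y : blinear A -> A (bsub x y) = bsub (A x) (A y).
Proof. intros HA. unfold bsub. rewrite (proj1 HA), blin_opp; auto. Qed.

Lemma opow_linear {X : Banach} (A : X -> X) n : blinear A -> blinear (opow A n).
Proof.
  intros HA. induction n; simpl. split; auto.
  destruct IHn as [H1 H2]. split; intros.
  rewrite H1. apply (proj1 HA). rewrite H2. apply (proj2 HA).
Qed.

Lemma opow_bounded {X : Banach} (A : X -> X) n : bbounded A -> bbounded (opow A n).
Proof.
  intros [C HC]. induction n; simpl.
  exists 1. intros; lra.
  destruct IHn as [C' HC']. exists (Rabs C * Rabs C').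
  intros x. eapply Rle_trans. apply HC.
  pose proof (bnorm_nonneg (opow A n x)). pose proof (bnorm_nonneg x).
  pose proof (HC' x).
  apply Rle_trans with (Rabs C * bnorm (opow A n x)).
  apply Rmult_le_compat_r; auto. apply Rle_abs.
  rewrite Rmult_assoc. apply Rmult_le_compat_l. apply Rabs_pos.
  eapply Rle_trans. apply H1. apply Rmult_le_compat_r; auto. apply Rle_abs.
Qed.

Lemma bbounded_pos {X : Banach} (A : X -> X) : bbounded A -> exists C, C > 0 /\ forall x, bnorm (A x) <= C * bnorm x.
Proof.
  intros [C HC]. exists (Rabs C + 1). split. pose proof (Rabs_pos C); lra.
  intros x. eapply Rle_trans. apply HC. apply Rmult_le_compat_r. apply bnorm_nonneg.
  pose proof (Rle_abs C); lra.
Qed.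

Lemma opow_comm {X : Banach} (A : X -> X) n x : A (opow A n x) = opow A n (A x).
Proof. induction n; simpl; auto. now rewrite IHn. Qed.

Lemma opow_add {X : Banach} (A : X -> X) n m x : opow A (n + m) x = opow A n (opow A m x).
Proof. induction n; simpl; auto. now rewrite IHn. Qed.


Fixpoint rsum (n : nat) (c : nat -> R) : R :=
  match n with O => 0 | S m => rsum m c + c m end.

Lemma bsum_ext {X : Banach} n (F G : nat -> X) :
  (forall k, (k < n)%nat -> F k = G k) -> bsum n F = bsum n G.
Proof. induction n; simpl; intros H; auto. rewrite IHn, H; auto. Qed.

Lemma rsum_ext n (F G : nat -> R) :
  (forall k, (k < n)%nat -> F k = G k) -> rsum n F = rsum n G.
Proof. induction n; simpl; intros H; auto. rewrite IHn, H; auto. Qed.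

Lemma bsum_add {X : Banach} n (F G : nat -> X) :
  bsum n (fun k => badd (F k) (G k)) = badd (bsum n F) (bsum n G).
Proof. induction n; simpl. now rewrite badd_0. rewrite IHn. apply badd_swap. Qed.

Lemma bsum_zero {X : Banach} n (F : nat -> X) :
  (forall k, (k < n)%nat -> F k = bzero) -> bsum n F = bzero.
Proof. induction n; simpl; intros H; auto. rewrite IHn, H; auto. apply badd_0. Qed.

Lemma bsum_lin {X : Banach} (A : X -> X) n (F : nat -> X) :
  blinear A -> A (bsum n F) = bsum n (fun k => A (F k)).
Proof. intros HA. induction n; simpl. now apply blin_zero. rewrite (proj1 HA), IHn. auto. Qed.

Lemma bsum_scal {X : Banach} c n (F : nat -> X) :
  bscal c (bsum n F) = bsum n (fun k => bscal c (F k)).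
Proof. induction n; simpl. apply bscal_zero. rewrite bscal_distr_l, IHn. auto. Qed.

Lemma bsum_opp {X : Banach} n (F : nat -> X) :
  bopp (bsum n F) = bsum n (fun k => bopp (F k)).
Proof. induction n; simpl. apply bopp_zero. rewrite bopp_add, IHn. auto. Qed.

Lemma bsum_sub {X : Banach} n (F G : nat -> X) :
  bsum n (fun k => bsub (F k) (G k)) = bsub (bsum n F) (bsum n G).
Proof. unfold bsub. rewrite bsum_add, bsum_opp. auto. Qed.

Lemma rsum_bscal {X : Banach} n (c : nat -> R) (x : X) :
  bscal (rsum n c) x = bsum n (fun k => bscal (c k) x).
Proof. induction n; simpl. apply bscal_0. rewrite bscal_distr_r, IHn. auto. Qed.

Lemma bsum_exchange {X : Banach} n m (F : nat -> nat -> X) :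
  bsum n (fun k => bsum m (fun j => F k j)) = bsum m (fun j => bsum n (fun k => F k j)).
Proof.
  induction n; simpl. symmetry. apply bsum_zero. auto.
  rewrite IHn, <- bsum_add. auto.
Qed.

Lemma bsum_split {X : Banach} n m (F : nat -> X) :
  bsum (n + m) F = badd (bsum n F) (bsum m (fun k => F (n + k)%nat)).
Proof.
  induction m; simpl. rewrite Nat.add_0_r, badd_0. auto.
  rewrite Nat.add_succ_r. simpl. rewrite IHm, badd_assoc. auto.
Qed.

Lemma bsum_shift {X : Banach} n (F : nat -> X) :
  bsum (S n) F = badd (F O) (bsum n (fun k => F (S k))).
Proof.
  induction n. simpl. rewrite badd_0l, badd_0. auto.
  change (bsum (S (S n)) F) with (badd (bsum (S n) F) (F (S n))).
  rewrite IHn. simpl. rewrite badd_assoc. auto.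
Qed.

Lemma bsum_norm {X : Banach} n (F : nat -> X) :
  bnorm (bsum n F) <= rsum n (fun k => bnorm (F k)).
Proof.
  induction n; simpl. rewrite bnorm_zero. lra.
  eapply Rle_trans. apply bnorm_triangle. lra.
Qed.

Lemma rsum_le n (a b : nat -> R) :
  (forall k, (k < n)%nat -> a k <= b k) -> rsum n a <= rsum n b.
Proof. induction n; simpl; intros H. lra. pose proof (H n (Nat.lt_succ_diag_r n)). pose proof (IHn (fun k Hk => H k (Nat.lt_lt_succ_r _ _ Hk))). lra. Qed.

Lemma rsum_scal n c (a : nat -> R) : rsum n (fun k => c * a k) = c * rsum n a.
Proof. induction n; simpl. ring. rewrite IHn. ring. Qed.

Lemma rsum_tele n (p : nat -> R) : rsum n (fun k => p (S k) - p k) = p n - p O.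
Proof. induction n; simpl. ring. rewrite IHn. ring. Qed.

Lemma bsum_tele {X : Banach} n (G : nat -> X) :
  bsum n (fun k => bsub (G (S k)) (G k)) = bsub (G n) (G O).
Proof.
  induction n; simpl. symmetry. apply bsub_diag.
  rewrite IHn. unfold bsub. rewrite (badd_comm (G (S n))), badd_swap.
  rewrite badd_opp, badd_0l. apply badd_comm.
Qed.

Lemma bsum_tail_zero {X : Banach} N0 N (F : nat -> X) :
  (forall k, (N0 <= k)%nat -> F k = bzero) -> (N0 <= N)%nat -> bsum N F = bsum N0 F.
Proof.
  intros H HN. induction HN; auto. simpl. rewrite IHHN, H; auto. apply badd_0.
Qed.

Lemma bsum_eq_zero_tail {X : Banach} N1 N2 (F : nat -> X) :
  (forall k, (N1 <= k)%nat -> F k = bzero) -> (forall k, (N2 <= k)%nat -> F k = bzero) ->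
  bsum N1 F = bsum N2 F.
Proof.
  intros H1 H2. destruct (Nat.le_ge_cases N1 N2).
  symmetry. apply bsum_tail_zero with (N0:=N1); auto.
  apply bsum_tail_zero with (N0:=N2); auto.
Qed.

Lemma rsum_nonneg n (a : nat -> R) : (forall k, (k < n)%nat -> 0 <= a k) -> 0 <= rsum n a.
Proof. intros H. replace 0 with (rsum n (fun _ => 0)). apply rsum_le; auto. induction n; simpl; auto. rewrite IHn; auto. ring. Qed.


Lemma bsub_chain {X : Banach} (a b c : X) : badd (bsub a b) (bsub b c) = bsub a c.
Proof.
  unfold bsub. rewrite <- badd_assoc, (badd_assoc (bopp b)), (badd_comm (bopp b) b), badd_opp, badd_0l.
  reflexivity.
Qed.

Lemma bsub_scal_decomp {X : Banach} r L (w l : X) :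
  bsub (bscal r w) (bscal L l) = badd (bscal (r - L) w) (bscal L (bsub w l)).
Proof. rewrite bscal_sub_r, bscal_sub. symmetry. apply bsub_chain. Qed.

Definition rlim_in (r : R -> R) (D : R -> Prop) (t0 L : R) : Prop :=
  forall eps, eps > 0 -> exists delta, delta > 0 /\
    forall s, D s -> s <> t0 -> Rabs (s - t0) < delta -> Rabs (r s - L) < eps.

Lemma lim_in_local {X : Banach} (g h : R -> X) D D' t0 l r :
  r > 0 -> (forall s, D s -> s <> t0 -> Rabs (s - t0) < r -> D' s /\ g s = h s) ->
  lim_in h D' t0 l -> lim_in g D t0 l.
Proof.
  intros Hr Hgh Hl eps Heps. destruct (Hl eps Heps) as [d [Hd H]].
  exists (Rmin d r). split. apply Rmin_pos; lra.
  intros s Ds Hs Hst. pose proof (Rmin_l d r). pose proof (Rmin_r d r).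
  destruct (Hgh s Ds Hs) as [D's E]. lra. rewrite E. apply H; auto. lra.
Qed.

Lemma lim_in_ext {X : Banach} (g h : R -> X) D t0 l :
  (forall s, D s -> s <> t0 -> g s = h s) -> lim_in h D t0 l -> lim_in g D t0 l.
Proof. intros H. apply lim_in_local with (r := 1). lra. intros; split; auto. Qed.

Lemma lim_in_const {X : Banach} (c : X) D t0 : lim_in (fun _ => c) D t0 c.
Proof. intros eps Heps. exists 1. split. lra. intros. rewrite bsub_diag, bnorm_zero. lra. Qed.

Lemma lim_in_add {X : Banach} (g h : R -> X) D t0 l1 l2 :
  lim_in g D t0 l1 -> lim_in h D t0 l2 ->
  lim_in (fun s => badd (g s) (h s)) D t0 (badd l1 l2).
Proof.
  intros H1 H2 eps Heps.
  destruct (H1 (eps/2)) as [d1 [Hd1 K1]]. lra.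
  destruct (H2 (eps/2)) as [d2 [Hd2 K2]]. lra.
  exists (Rmin d1 d2). split. apply Rmin_pos; lra.
  intros s Ds Hs Hst. pose proof (Rmin_l d1 d2). pose proof (Rmin_r d1 d2).
  rewrite bsub_add_add. eapply Rle_lt_trans. apply bnorm_triangle.
  pose proof (K1 s Ds Hs). pose proof (K2 s Ds Hs).
  assert (bnorm (bsub (g s) l1) < eps/2) by (apply K1; auto; lra).
  assert (bnorm (bsub (h s) l2) < eps/2) by (apply K2; auto; lra). lra.
Qed.

Lemma lim_in_op {X : Banach} (A : X -> X) (g : R -> X) D t0 l :
  blinear A -> bbounded A -> lim_in g D t0 l -> lim_in (fun s => A (g s)) D t0 (A l).
Proof.
  intros HA HB H eps Heps. destruct (bbounded_pos A HB) as [C [HC HCb]].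
  destruct (H (eps / C)) as [d [Hd K]]. apply Rdiv_lt_0_compat; lra.
  exists d. split; auto. intros s Ds Hs Hst.
  rewrite <- blin_sub; auto. eapply Rle_lt_trans. apply HCb.
  pose proof (K s Ds Hs Hst).
  apply Rmult_lt_compat_l with (r := C) in H0; auto.
  replace (C * (eps / C)) with eps in H0 by (field; lra). auto.
Qed.

Lemma lim_in_scal {X : Banach} c (g : R -> X) D t0 l :
  lim_in g D t0 l -> lim_in (fun s => bscal c (g s)) D t0 (bscal c l).
Proof.
  intros H eps Heps. destruct (H (eps / (Rabs c + 1))) as [d [Hd K]].
  apply Rdiv_lt_0_compat; auto. pose proof (Rabs_pos c); lra.
  exists d. split; auto. intros s Ds Hs Hst.
  rewrite <- bscal_sub, bnorm_scal. pose proof (K s Ds Hs Hst).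
  pose proof (Rabs_pos c). pose proof (bnorm_nonneg (bsub (g s) l)).
  apply Rle_lt_trans with ((Rabs c + 1) * bnorm (bsub (g s) l)). nra.
  apply Rmult_lt_compat_l with (r := Rabs c + 1) in H0. 2: lra.
  replace ((Rabs c + 1) * (eps / (Rabs c + 1))) with eps in H0 by (field; lra). auto.
Qed.

Lemma lim_in_mul {X : Banach} (r : R -> R) (w : R -> X) D t0 L l :
  rlim_in r D t0 L -> lim_in w D t0 l ->
  lim_in (fun s => bscal (r s) (w s)) D t0 (bscal L l).
Proof.
  intros Hr Hw eps Heps.
  set (nl := bnorm l). assert (Hnl : 0 <= nl) by apply bnorm_nonneg.
  destruct (Hr (eps / (2 * (nl + 1)))) as [d1 [Hd1 K1]].
  apply Rdiv_lt_0_compat; lra.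
  destruct (Hw (Rmin 1 (eps / (2 * (Rabs L + 1))))) as [d2 [Hd2 K2]].
  apply Rmin_pos. lra. apply Rdiv_lt_0_compat. lra. pose proof (Rabs_pos L); lra.
  exists (Rmin d1 d2). split. apply Rmin_pos; lra.
  intros s Ds Hs Hst. pose proof (Rmin_l d1 d2). pose proof (Rmin_r d1 d2).
  assert (A1 : Rabs (r s - L) < eps / (2 * (nl + 1))) by (apply K1; auto; lra).
  assert (A2 : bnorm (bsub (w s) l) < Rmin 1 (eps / (2 * (Rabs L + 1)))) by (apply K2; auto; lra).
  pose proof (Rmin_l 1 (eps / (2 * (Rabs L + 1)))). pose proof (Rmin_r 1 (eps / (2 * (Rabs L + 1)))).
  rewrite bsub_scal_decomp. eapply Rle_lt_trans. apply bnorm_triangle.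
  rewrite !bnorm_scal.
  assert (Hws : bnorm (w s) <= nl + 1).
  { replace (w s) with (badd (bsub (w s) l) l) by apply bsub_add_cancel.
    eapply Rle_trans. apply bnorm_triangle. unfold nl. lra. }
  pose proof (Rabs_pos (r s - L)). pose proof (Rabs_pos L). pose proof (bnorm_nonneg (w s)).
  pose proof (bnorm_nonneg (bsub (w s) l)).
  assert (E1 : Rabs (r s - L) * bnorm (w s) <= eps / 2).
  { apply Rle_trans with (eps / (2 * (nl + 1)) * (nl + 1)). apply Rmult_le_compat; lra.
    right. field. lra. }
  assert (E2 : Rabs L * bnorm (bsub (w s) l) < eps / 2).
  { apply Rle_lt_trans with ((Rabs L + 1) * bnorm (bsub (w s) l)). nra.
    apply Rlt_le_trans with ((Rabs L + 1) * (eps / (2 * (Rabs L + 1)))).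
    apply Rmult_lt_compat_l; lra. right. field. lra. }
  lra.
Qed.

Lemma lim_in_shift {X : Banach} (g : R -> X) D D' t0 c l :
  lim_in g D (t0 - c) l -> (forall s, D' s -> D (s - c)) ->
  lim_in (fun s => g (s - c)) D' t0 l.
Proof.
  intros H HD eps Heps. destruct (H eps Heps) as [d [Hd K]]. exists d. split; auto.
  intros s Ds Hs Hst. apply K; auto. intro E; apply Hs; lra.
  replace (s - c - (t0 - c)) with (s - t0) by ring. auto.
Qed.

Lemma lim_in_bsum {X : Banach} N (F : nat -> R -> X) (L : nat -> X) D t0 :
  (forall m, (m < N)%nat -> lim_in (F m) D t0 (L m)) ->
  lim_in (fun s => bsum N (fun m => F m s)) D t0 (bsum N L).
Proof.
  induction N; simpl; intros H. apply lim_in_const.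
  apply lim_in_add. apply IHN. intros; apply H; lia. apply H; lia.
Qed.

Lemma lim_in_sub {X : Banach} (g h : R -> X) D t0 l1 l2 :
  lim_in g D t0 l1 -> lim_in h D t0 l2 ->
  lim_in (fun s => bsub (g s) (h s)) D t0 (bsub l1 l2).
Proof.
  intros H1 H2. unfold bsub. apply lim_in_add; auto.
  apply lim_in_ext with (h := fun s => bscal (-1) (h s)). intros; apply bopp_scal.
  rewrite bopp_scal. apply lim_in_scal; auto.
Qed.

Lemma rlim_const c D t0 : rlim_in (fun _ => c) D t0 c.
Proof. intros eps Heps. exists 1. split. lra. intros. replace (c - c) with 0 by ring. rewrite Rabs_R0. lra. Qed.

Lemma rlim_cont (phi : R -> R) D t0 : continuity_pt phi t0 -> rlim_in phi D t0 (phi t0).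
Proof.
  intros H eps Heps. destruct (H eps Heps) as [d [Hd K]]. exists d. split; auto.
  intros s Ds Hs Hst. apply (K s). split. split. exact I. now apply not_eq_sym. simpl. unfold R_dist. auto.
Qed.

Lemma rlim_deriv (phi : R -> R) D t0 l : derivable_pt_lim phi t0 l ->
  rlim_in (fun s => (phi s - phi t0) / (s - t0)) D t0 l.
Proof.
  intros H eps Heps. destruct (H eps Heps) as [d K]. exists d. split. apply cond_pos.
  intros s Ds Hs Hst. specialize (K (s - t0)).
  replace (t0 + (s - t0)) with s in K by ring. apply K. lra. auto.
Qed.

Lemma rlim_local (r1 r2 : R -> R) D D' t0 L r :
  r > 0 -> (forall s, D s -> s <> t0 -> Rabs (s - t0) < r -> D' s /\ r1 s = r2 s) ->
  rlim_in r2 D' t0 L -> rlim_in r1 D t0 L.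
Proof.
  intros Hr Hgh Hl eps Heps. destruct (Hl eps Heps) as [d [Hd H]].
  exists (Rmin d r). split. apply Rmin_pos; lra.
  intros s Ds Hs Hst. pose proof (Rmin_l d r). pose proof (Rmin_r d r).
  destruct (Hgh s Ds Hs) as [D's E]. lra. rewrite E. apply H; auto. lra.
Qed.


Definition dq {X : Banach} (G : R -> X) (t s : R) : X := bscal (/ (s - t)) (bsub (G s) (G t)).

Lemma deriv_on_dq {X : Banach} (G g : R -> X) D :
  deriv_on G D g <-> forall t, D t -> lim_in (dq G t) D t (g t).
Proof. reflexivity. Qed.

Lemma deriv_cont_pt {X : Banach} (G : R -> X) D t l :
  lim_in (dq G t) D t l -> lim_in G D t (G t).
Proof.
  intros H eps Heps. destruct (H 1) as [d [Hd K]]. lra.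
  set (c := bnorm l + 1). assert (Hc : c > 0) by (unfold c; pose proof (bnorm_nonneg l); lra).
  exists (Rmin d (eps / c)). split. apply Rmin_pos; auto. apply Rdiv_lt_0_compat; lra.
  intros s Ds Hs Hst. pose proof (Rmin_l d (eps/c)). pose proof (Rmin_r d (eps/c)).
  assert (K1 : bnorm (bsub (dq G t s) l) < 1) by (apply K; auto; lra).
  assert (Hq : bnorm (dq G t s) <= c).
  { replace (dq G t s) with (badd (bsub (dq G t s) l) l) by apply bsub_add_cancel.
    eapply Rle_trans. apply bnorm_triangle. unfold c; lra. }
  assert (E : bsub (G s) (G t) = bscal (s - t) (dq G t s)).
  { unfold dq. rewrite bscal_assoc. rewrite Rinv_r. now rewrite bscal_1. lra. }
  rewrite E, bnorm_scal. pose proof (Rabs_pos (s - t)). pose proof (bnorm_nonneg (dq G t s)).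
  apply Rle_lt_trans with (Rabs (s - t) * c). apply Rmult_le_compat_l; lra.
  apply Rlt_le_trans with (eps / c * c). apply Rmult_lt_compat_r; lra. right; field; lra.
Qed.

Lemma deriv_cont {X : Banach} (G g : R -> X) D : deriv_on G D g -> cont_on G D.
Proof. intros H t Dt. eapply deriv_cont_pt. apply H; auto. Qed.

Lemma deriv_sub_set {X : Banach} (G g : R -> X) D D' :
  deriv_on G D g -> (forall s, D' s -> D s) -> deriv_on G D' g.
Proof.
  intros H HD t Dt. apply lim_in_local with (h := dq G t) (D' := D) (r := 1). lra.
  intros; split; auto. apply H; auto.
Qed.

Lemma cont_sub_set {X : Banach} (G : R -> X) D D' :
  cont_on G D -> (forall s, D' s -> D s) -> cont_on G D'.
Proof.
  intros H HD t Dt. apply lim_in_local with (h := G) (D' := D) (r := 1). lra.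
  intros; split; auto. apply H; auto.
Qed.

Lemma dq_add {X : Banach} (G H : R -> X) t s :
  dq (fun u => badd (G u) (H u)) t s = badd (dq G t s) (dq H t s).
Proof. unfold dq. rewrite bsub_add_add, bscal_distr_l. auto. Qed.

Lemma dq_sub {X : Banach} (G H : R -> X) t s :
  dq (fun u => bsub (G u) (H u)) t s = bsub (dq G t s) (dq H t s).
Proof. unfold dq. rewrite bsub_sub_sub, bscal_sub. auto. Qed.

Lemma deriv_add {X : Banach} (G H g h : R -> X) D :
  deriv_on G D g -> deriv_on H D h ->
  deriv_on (fun u => badd (G u) (H u)) D (fun u => badd (g u) (h u)).
Proof.
  intros HG HH t Dt. apply lim_in_ext with (h := fun s => badd (dq G t s) (dq H t s)).
  intros s _ _; exact (dq_add G H t s). apply lim_in_add; [apply HG|apply HH]; auto.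
Qed.

Lemma deriv_sub {X : Banach} (G H g h : R -> X) D :
  deriv_on G D g -> deriv_on H D h ->
  deriv_on (fun u => bsub (G u) (H u)) D (fun u => bsub (g u) (h u)).
Proof.
  intros HG HH t Dt. apply lim_in_ext with (h := fun s => bsub (dq G t s) (dq H t s)).
  intros s _ _; exact (dq_sub G H t s). apply lim_in_sub; [apply HG|apply HH]; auto.
Qed.

Lemma deriv_op {X : Banach} (A : X -> X) (G g : R -> X) D :
  blinear A -> bbounded A -> deriv_on G D g ->
  deriv_on (fun u => A (G u)) D (fun u => A (g u)).
Proof.
  intros HA HB HG t Dt. apply lim_in_ext with (h := fun s => A (dq G t s)).
  intros s _ _. unfold dq. rewrite (proj2 HA), (blin_sub A); auto.
  apply lim_in_op; auto. apply HG; auto.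
Qed.

Lemma deriv_shift {X : Banach} (G g : R -> X) D D' c :
  deriv_on G D g -> (forall s, D' s -> D (s - c)) ->
  deriv_on (fun u => G (u - c)) D' (fun u => g (u - c)).
Proof.
  intros HG HD t Dt. apply lim_in_ext with (h := fun s => dq G (t - c) (s - c)).
  intros. unfold dq. f_equal. f_equal. ring.
  apply lim_in_shift with (g := dq G (t - c)) (D := D); auto. apply HG; auto.
Qed.

Lemma deriv_bsum {X : Banach} N (G g : nat -> R -> X) D :
  (forall m, (m < N)%nat -> deriv_on (G m) D (g m)) ->
  deriv_on (fun u => bsum N (fun m => G m u)) D (fun u => bsum N (fun m => g m u)).
Proof.
  induction N; simpl; intros H.
  intros t Dt. apply lim_in_ext with (h := fun _ => bzero).
  intros. unfold dq. rewrite bsub_diag, bscal_zero. auto. apply lim_in_const.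
  apply deriv_add. apply IHN; intros; apply H; lia. apply H; lia.
Qed.

Lemma deriv_zero {X : Banach} (G : R -> X) D :
  (forall s, D s -> G s = bzero) -> deriv_on G D (fun _ => bzero).
Proof.
  intros H t Dt. apply lim_in_ext with (h := fun _ => bzero).
  intros. unfold dq. rewrite H, H; auto. rewrite bsub_diag, bscal_zero. auto. apply lim_in_const.
Qed.

Lemma deriv_ext {X : Banach} (G H g h : R -> X) D :
  (forall s, D s -> G s = H s) -> (forall s, D s -> g s = h s) ->
  deriv_on H D h -> deriv_on G D g.
Proof.
  intros E1 E2 HH t Dt. rewrite E2; auto. apply lim_in_ext with (h := dq H t).
  intros. unfold dq. rewrite !E1; auto. apply HH; auto.
Qed.

Lemma deriv_local {X : Banach} (G H g : R -> X) D D' t r :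
  r > 0 -> D t -> D' t -> G t = H t ->
  (forall s, D s -> s <> t -> Rabs (s - t) < r -> D' s /\ G s = H s) ->
  lim_in (dq H t) D' t (g t) -> lim_in (dq G t) D t (g t).
Proof.
  intros Hr Dt D't Et Hl K. apply lim_in_local with (h := dq H t) (D' := D') (r := r); auto.
  intros s Ds Hs Hst. destruct (Hl s Ds Hs Hst). split; auto. unfold dq. rewrite H1, Et. auto.
Qed.

Lemma dq_scal_fun {X : Banach} (phi : R -> R) (v : R -> X) t s :
  s <> t ->
  dq (fun u => bscal (phi u) (v u)) t s =
  badd (bscal ((phi s - phi t) / (s - t)) (v s)) (bscal (phi t) (dq v t s)).
Proof.
  intros Hs. unfold dq. rewrite bsub_scal_decomp, bscal_distr_l, !bscal_assoc.
  f_equal; f_equal. unfold Rdiv. ring. ring.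
Qed.

Lemma deriv_scal_fun {X : Banach} (phi phi' : R -> R) (v v' : R -> X) D :
  (forall t, D t -> rlim_in (fun s => (phi s - phi t) / (s - t)) D t (phi' t)) ->
  deriv_on v D v' ->
  deriv_on (fun u => bscal (phi u) (v u)) D
           (fun u => badd (bscal (phi' u) (v u)) (bscal (phi u) (v' u))).
Proof.
  intros Hphi Hv t Dt.
  apply lim_in_ext with (h := fun s => badd (bscal ((phi s - phi t) / (s - t)) (v s)) (bscal (phi t) (dq v t s))).
  intros s _ Hs; exact (dq_scal_fun phi v t s Hs).
  apply lim_in_add. apply lim_in_mul. apply Hphi; auto. eapply deriv_cont_pt. apply Hv; auto.
  apply lim_in_scal. apply Hv; auto.
Qed.

Lemma deriv_scal_const {X : Banach} c (G g : R -> X) D :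
  deriv_on G D g -> deriv_on (fun u => bscal c (G u)) D (fun u => bscal c (g u)).
Proof.
  intros HG t Dt. apply lim_in_ext with (h := fun s => bscal c (dq G t s)).
  intros s _ _. unfold dq. rewrite <- bscal_sub, !bscal_assoc, Rmult_comm. reflexivity.
  apply lim_in_scal. apply HG; auto.
Qed.

Lemma cont_add {X : Banach} (G H : R -> X) D :
  cont_on G D -> cont_on H D -> cont_on (fun u => badd (G u) (H u)) D.
Proof. intros HG HH t Dt. apply lim_in_add; auto. Qed.

Lemma cont_sub {X : Banach} (G H : R -> X) D :
  cont_on G D -> cont_on H D -> cont_on (fun u => bsub (G u) (H u)) D.
Proof. intros HG HH t Dt. apply lim_in_sub; auto. Qed.

Lemma cont_op {X : Banach} (A : X -> X) (G : R -> X) D :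
  blinear A -> bbounded A -> cont_on G D -> cont_on (fun u => A (G u)) D.
Proof. intros HA HB HG t Dt. apply lim_in_op; auto. Qed.

Lemma cont_shift {X : Banach} (G : R -> X) D D' c :
  cont_on G D -> (forall s, D' s -> D (s - c)) -> cont_on (fun u => G (u - c)) D'.
Proof. intros HG HD t Dt. apply lim_in_shift with (D := D); auto. Qed.

Lemma cont_bsum {X : Banach} N (G : nat -> R -> X) D :
  (forall m, (m < N)%nat -> cont_on (G m) D) -> cont_on (fun u => bsum N (fun m => G m u)) D.
Proof. intros H t Dt. apply lim_in_bsum. intros; apply H; auto. Qed.

Lemma cont_scal_fun {X : Banach} (phi : R -> R) (v : R -> X) D :
  (forall t, D t -> rlim_in phi D t (phi t)) -> cont_on v D ->
  cont_on (fun u => bscal (phi u) (v u)) D.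
Proof. intros Hp Hv t Dt. apply lim_in_mul; auto. Qed.

Lemma cont_const {X : Banach} (c : X) D : cont_on (fun _ => c) D.
Proof. intros t Dt. apply lim_in_const. Qed.

Lemma cont_ext {X : Banach} (G H : R -> X) D :
  (forall s, D s -> G s = H s) -> cont_on H D -> cont_on G D.
Proof. intros E HH t Dt. rewrite E; auto. apply lim_in_ext with (h := H). intros; auto. apply HH; auto. Qed.


Lemma dq_norm {X : Banach} (G : R -> X) t s :
  s <> t -> bnorm (bsub (G s) (G t)) = Rabs (s - t) * bnorm (dq G t s).
Proof.
  intros Hs. unfold dq. rewrite bnorm_scal, <- Rmult_assoc, <- Rabs_mult, Rinv_r.
  rewrite Rabs_R1. ring. lra.
Qed.

Lemma lub_exists (E : R -> Prop) (a b : R) :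
  E a -> (forall r, E r -> r <= b) -> exists m, is_lub E m.
Proof.
  intros Ha Hb. destruct (completeness E) as [m Hm]. exists b. intros r Hr; auto.
  exists a; auto. exists m; auto.
Qed.

Lemma mvi_aux {X : Banach} (H h : R -> X) D u v M eta :
  u <= v -> eta > 0 -> (forall r, u <= r <= v -> D r) -> deriv_on H D h ->
  (forall r, u <= r <= v -> bnorm (h r) <= M) ->
  bnorm (bsub (H v) (H u)) <= (M + eta) * (v - u).
Proof.
  intros Huv Heta HD HH Hh.
  assert (HM : 0 <= M). { eapply Rle_trans. apply (bnorm_nonneg (h u)). apply (Hh u). lra. }
  set (P := fun r => forall r', u <= r' <= r -> bnorm (bsub (H r') (H u)) <= (M + eta) * (r' - u)).
  set (E := fun r => u <= r <= v /\ P r).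
  assert (Eu : E u).
  { split. lra. intros r' Hr'. replace r' with u by lra. rewrite bsub_diag, bnorm_zero. lra. }
  destruct (lub_exists E u v Eu) as [sg [Hub Hlub]]. intros r [Hr _]; lra.
  assert (Hsg1 : u <= sg) by (apply Hub; auto).
  assert (Hsg2 : sg <= v). { apply Hlub. intros r [Hr _]; lra. }
  assert (Pbelow : forall r', u <= r' < sg -> bnorm (bsub (H r') (H u)) <= (M + eta) * (r' - u)).
  { intros r' Hr'. destruct (classic (exists r, E r /\ r' < r)) as [[r [[_ Pr] Hr]] | Hno].
    apply Pr; lra.
    assert (sg <= r'). { apply Hlub. intros r Er. destruct (Rle_dec r r'); auto.
      exfalso. apply Hno. exists r. split; auto. lra. }
    lra. }
  assert (Psg : P sg).
  { intros r' Hr'. destruct (Rle_lt_dec sg r'); [|apply Pbelow; lra].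
    replace r' with sg by lra.
    destruct (Req_dec sg u) as [Eq|Neq].
    rewrite Eq, bsub_diag, bnorm_zero. lra.
    apply bnorm_le_eps. intros eps Heps.
    pose proof (deriv_cont H h D HH sg (HD sg ltac:(lra))) as Hc.
    destruct (Hc eps Heps) as [d [Hd K]].
    pose proof (Rmax_l u (sg - d/2)). pose proof (Rmax_r u (sg - d/2)).
    assert (Rmax u (sg - d/2) < sg) by (apply Rmax_lub_lt; lra).
    set (r0 := Rmax u (sg - d/2)) in *.
    assert (Hr0 : u <= r0 < sg) by lra.
    assert (Hr0d : Rabs (r0 - sg) < d). { rewrite Rabs_left; lra. }
    pose proof (K r0 (HD r0 ltac:(lra)) ltac:(lra) Hr0d) as K0.
    pose proof (Pbelow r0 Hr0) as P0.
    eapply Rle_trans. apply (bsub_triangle _ (H r0)).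
    rewrite bnorm_sub_sym in K0.
    assert ((M + eta) * (r0 - u) <= (M + eta) * (sg - u)) by (apply Rmult_le_compat_l; lra).
    lra. }
  assert (Hsgv : sg = v).
  { destruct (Req_dec sg v); auto. exfalso.
    destruct (HH sg (HD sg ltac:(lra)) eta Heta) as [d [Hd K]].
    set (s := Rmin (sg + d/2) v).
    assert (Hs : sg < s <= v). { unfold s. split. apply Rmin_glb_lt; lra. apply Rmin_r. }
    assert (Es : E s).
    { split. lra. intros r' Hr'. destruct (Rle_dec r' sg). apply Psg; lra.
      assert (Kr : bnorm (bsub (dq H sg r') (h sg)) < eta).
      { apply K. apply HD; lra. lra. rewrite Rabs_right. pose proof (Rmin_l (sg + d/2) v). fold s in H1. lra. lra. }
      assert (Hq : bnorm (dq H sg r') <= M + eta).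
      { replace (dq H sg r') with (badd (bsub (dq H sg r') (h sg)) (h sg)) by apply bsub_add_cancel.
        eapply Rle_trans. apply bnorm_triangle. pose proof (Hh sg ltac:(lra)). lra. }
      eapply Rle_trans. apply (bsub_triangle _ (H sg)).
      rewrite dq_norm by lra. rewrite Rabs_right by lra.
      pose proof (Psg sg ltac:(lra)).
      assert ((r' - sg) * bnorm (dq H sg r') <= (r' - sg) * (M + eta)) by (apply Rmult_le_compat_l; lra).
      nra. }
    pose proof (Hub s Es). lra. }
  subst sg. apply Psg. lra.
Qed.

Lemma mvi {X : Banach} (H h : R -> X) D u v M :
  u <= v -> (forall r, u <= r <= v -> D r) -> deriv_on H D h ->
  (forall r, u <= r <= v -> bnorm (h r) <= M) ->
  bnorm (bsub (H v) (H u)) <= M * (v - u).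
Proof.
  intros Huv HD HH Hh. apply bnorm_le_eps. intros eps Heps.
  pose proof (mvi_aux H h D u v M (eps / (v - u + 1)) Huv) as K.
  assert (eps / (v - u + 1) > 0) by (apply Rdiv_lt_0_compat; lra).
  eapply Rle_trans. apply K; auto.
  rewrite Rmult_plus_distr_r. apply Rplus_le_compat_l.
  apply Rle_trans with (eps / (v - u + 1) * (v - u + 1)). apply Rmult_le_compat_l; lra.
  right; field; lra.
Qed.

Lemma mvi_c {X : Banach} (G g : R -> X) D u v c M :
  u <= v -> (forall r, u <= r <= v -> D r) -> deriv_on G D g ->
  (forall r, u <= r <= v -> bnorm (bsub (g r) c) <= M) ->
  bnorm (bsub (bsub (G v) (G u)) (bscal (v - u) c)) <= M * (v - u).
Proof.
  intros Huv HD HG Hg.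
  set (H := fun r => bsub (G r) (bscal r c)).
  assert (HH : deriv_on H D (fun r => bsub (g r) c)).
  { unfold H. apply deriv_sub. auto. intros t Dt.
    apply lim_in_ext with (h := fun _ => c). intros s _ Hs. unfold dq.
    rewrite <- bscal_sub_r, bscal_assoc, Rinv_l, bscal_1. auto. lra.
    apply lim_in_const. }
  pose proof (mvi H _ D u v M Huv HD HH Hg). unfold H in H0.
  rewrite bsub_sub_sub, <- bscal_sub_r in H0. auto.
Qed.

Lemma deriv_zero_const {X : Banach} (G : R -> X) D u v :
  u <= v -> (forall r, u <= r <= v -> D r) -> deriv_on G D (fun _ => bzero) -> G v = G u.
Proof.
  intros Huv HD HG. pose proof (mvi G (fun _ => bzero) D u v 0 Huv HD HG) as K.
  apply bnorm_eq0_sub. pose proof (bnorm_nonneg (bsub (G v) (G u))).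
  assert (bnorm (bsub (G v) (G u)) <= 0 * (v - u)). apply K. intros; rewrite bnorm_zero; lra.
  lra.
Qed.

Lemma unif_cont {X : Banach} (g : R -> X) D a b :
  a <= b -> (forall r, a <= r <= b -> D r) -> cont_on g D ->
  forall eps, eps > 0 -> exists delta, delta > 0 /\
    forall x y, a <= x <= b -> a <= y <= b -> Rabs (x - y) < delta -> bnorm (bsub (g x) (g y)) < eps.
Proof.
  intros Hab HD Hg eps Heps.
  set (Q := fun r => exists delta, delta > 0 /\ forall x y, a <= x <= r -> a <= y <= r ->
             Rabs (x - y) < delta -> bnorm (bsub (g x) (g y)) < eps).
  set (E := fun r => a <= r <= b /\ Q r).
  assert (Ea : E a).
  { split. lra. exists 1. split. lra. intros x y Hx Hy _. replace x with a by lra. replace y with a by lra.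
    rewrite bsub_diag, bnorm_zero. lra. }
  destruct (lub_exists E a b Ea) as [sg [Hub Hlub]]. intros r [Hr _]; lra.
  assert (Hsg1 : a <= sg) by (apply Hub; auto).
  assert (Hsg2 : sg <= b). { apply Hlub. intros r [Hr _]; lra. }
  destruct (Hg sg (HD sg ltac:(lra)) (eps/2)) as [d0 [Hd0 K0]]. lra.
  assert (K0' : forall x, a <= x <= b -> Rabs (x - sg) < d0 -> bnorm (bsub (g x) (g sg)) < eps/2).
  { intros x Hx Hxs. destruct (Req_dec x sg). subst. rewrite bsub_diag, bnorm_zero. lra.
    apply K0; auto. }
  assert (Hr : exists r, E r /\ sg - d0/2 < r).
  { destruct (classic (exists r, E r /\ sg - d0/2 < r)) as [Hy|Hno]; auto. exfalso.
    assert (sg <= sg - d0/2). { apply Hlub. intros r Er. destruct (Rle_dec r (sg - d0/2)); auto.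
      exfalso. apply Hno. exists r; split; auto. lra. } lra. }
  destruct Hr as [r [[Hr1 [d1 [Hd1 K1]]] Hr2]].
  assert (Hrs : r <= sg) by (apply Hub; split; auto; exists d1; auto).
  set (r2 := Rmin (sg + d0/2) b).
  assert (Er2 : E r2).
  { split. unfold r2. split. apply Rmin_glb; lra. apply Rmin_r.
    exists (Rmin d1 (d0/2)). split. apply Rmin_pos; lra.
    intros x y Hx Hy Hxy. pose proof (Rmin_l d1 (d0/2)). pose proof (Rmin_r d1 (d0/2)).
    pose proof (Rmin_l (sg + d0/2) b). pose proof (Rmin_r (sg + d0/2) b). fold r2 in H1, H2.
    destruct (Rle_dec x r); destruct (Rle_dec y r).
    apply K1; auto; lra.
    all: apply Rabs_def2 in Hxy.
    all: eapply Rle_lt_trans; [apply (bsub_triangle _ (g sg))|].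
    all: rewrite (bnorm_sub_sym (g sg) (g y)).
    all: assert (bnorm (bsub (g x) (g sg)) < eps/2) by (apply K0'; [lra|apply Rabs_def1; lra]).
    all: assert (bnorm (bsub (g y) (g sg)) < eps/2) by (apply K0'; [lra|apply Rabs_def1; lra]).
    all: lra. }
  pose proof (Hub r2 Er2).
  assert (Hb : r2 = b). { unfold r2 in *.
    destruct (Rle_dec (sg + d0/2) b). rewrite Rmin_left in H; lra. rewrite Rmin_right; lra. }
  rewrite Hb in Er2. destruct Er2 as [_ [d [Hd K]]]. exists d. split; auto.
Qed.


Definition RS {X : Banach} (g : R -> X) n (p xi : nat -> R) : X :=
  bsum n (fun k => bscal (p (S k) - p k) (g (xi k))).

Definition tagged a b n (p xi : nat -> R) delta : Prop :=
  p O = a /\ p n = b /\ (forall k, (k < n)%nat -> p k <= xi k <= p (S k) /\ p (S k) - p k < delta).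

Lemma is_RInt_tagged {X : Banach} (g : R -> X) a b I :
  is_RInt g a b I <-> forall eps, eps > 0 -> exists delta, delta > 0 /\
    forall n p xi, tagged a b n p xi delta -> bnorm (bsub (RS g n p xi) I) < eps.
Proof.
  split; intros H eps Heps; destruct (H eps Heps) as [d [Hd K]]; exists d; split; auto.
  intros n p xi [H1 [H2 H3]]. apply K; auto.
  intros n p xi H1 H2 H3. apply K. split; auto.
Qed.

Lemma tagged_mono a b n p xi d :
  tagged a b n p xi d -> forall i j, (i <= j <= n)%nat -> p i <= p j.
Proof.
  intros [_ [_ H]] i j Hij. destruct Hij as [Hij Hjn]. induction Hij. lra.
  pose proof (H m ltac:(lia)). pose proof (IHHij ltac:(lia)). lra.
Qed.

Lemma tagged_range a b n p xi d :
  tagged a b n p xi d -> forall k, (k <= n)%nat -> a <= p k <= b.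
Proof.
  intros Ht k Hk. pose proof (tagged_mono _ _ _ _ _ _ Ht 0 k ltac:(lia)).
  pose proof (tagged_mono _ _ _ _ _ _ Ht k n ltac:(lia)). destruct Ht as [E0 [En _]]. lra.
Qed.

Lemma tagged_ab a b n p xi d : tagged a b n p xi d -> a <= b.
Proof. intros Ht. pose proof (tagged_range _ _ _ _ _ _ Ht n (le_n n)). lra. Qed.

Lemma RS_bound {X : Banach} (g : R -> X) a b n p xi d c M :
  tagged a b n p xi d -> (forall r, a <= r <= b -> bnorm (bsub (g r) c) <= M) ->
  bnorm (bsub (RS g n p xi) (bscal (b - a) c)) <= M * (b - a).
Proof.
  intros Ht HM. pose proof Ht as [H0 [Hn H]].
  assert (E : bscal (b - a) c = bsum n (fun k => bscal (p (S k) - p k) c)).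
  { rewrite <- rsum_bscal, rsum_tele, H0, Hn. auto. }
  rewrite E. unfold RS. rewrite <- bsum_sub. eapply Rle_trans. apply bsum_norm.
  rewrite <- H0, <- Hn, <- rsum_tele, <- rsum_scal. apply rsum_le. intros k Hk.
  rewrite <- bscal_sub, bnorm_scal. destruct (H k Hk) as [Hx Hd].
  pose proof (tagged_range _ _ _ _ _ _ Ht k ltac:(lia)). pose proof (tagged_range _ _ _ _ _ _ Ht (S k) ltac:(lia)).
  rewrite Rabs_right by lra. rewrite (Rmult_comm M). apply Rmult_le_compat_l. lra. apply HM. lra.
Qed.

Lemma ftc {X : Banach} (G g : R -> X) a b :
  a <= b -> deriv_on G (fun s => a <= s <= b) g -> cont_on g (fun s => a <= s <= b) ->
  is_RInt g a b (bsub (G b) (G a)).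
Proof.
  intros Hab HG Hg. apply is_RInt_tagged. intros eps Heps.
  set (e := eps / (b - a + 1)). assert (He : e > 0) by (apply Rdiv_lt_0_compat; lra).
  destruct (unif_cont g _ a b Hab (fun r H => H) Hg e He) as [d [Hd K]].
  exists d. split; auto. intros n p xi Ht. pose proof Ht as [H0 [Hn H]].
  unfold RS. rewrite <- H0, <- Hn, <- (bsum_tele n (fun k => G (p k))), <- bsum_sub.
  eapply Rle_lt_trans. apply bsum_norm.
  apply Rle_lt_trans with (rsum n (fun k => e * (p (S k) - p k))).
  apply rsum_le. intros k Hk. destruct (H k Hk) as [Hx Hdk].
  pose proof (tagged_range _ _ _ _ _ _ Ht k ltac:(lia)). pose proof (tagged_range _ _ _ _ _ _ Ht (S k) ltac:(lia)).
  rewrite bnorm_sub_sym.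
  apply (mvi_c G g (fun s => a <= s <= b) (p k) (p (S k)) (g (xi k)) e); auto. lra.
  intros r Hr. lra. intros r Hr. left. apply K. lra. lra. apply Rabs_def1; lra.
  rewrite rsum_scal, rsum_tele, H0, Hn.
  apply Rlt_le_trans with (e * (b - a + 1)). apply Rmult_lt_compat_l; lra.
  right; unfold e; field; lra.
Qed.

Definition ov u v x y := Rmax 0 (Rmin v y - Rmax u x).

Lemma ov_chain u v x y z : u <= v -> x <= y <= z -> ov u v x y + ov u v y z = ov u v x z.
Proof. intros. unfold ov, Rmax, Rmin. repeat destruct Rle_dec; lra. Qed.

Lemma ov_nonneg u v x y : 0 <= ov u v x y.
Proof. apply Rmax_l. Qed.

Lemma ov_sym u v x y : ov u v x y = ov x y u v.
Proof. unfold ov. rewrite (Rmin_comm v y), (Rmax_comm u x). auto. Qed.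

Lemma ov_full a b u v : a <= u <= v -> v <= b -> ov u v a b = v - u.
Proof. intros. unfold ov, Rmax, Rmin. repeat destruct Rle_dec; lra. Qed.

Lemma ov_sum u v m (q : nat -> R) : u <= v -> (forall j, (j < m)%nat -> q j <= q (S j)) ->
  rsum m (fun j => ov u v (q j) (q (S j))) = ov u v (q O) (q m).
Proof.
  intros Huv Hq. induction m; simpl. unfold ov, Rmax, Rmin. repeat destruct Rle_dec; lra.
  rewrite IHm by (intros; apply Hq; lia). apply ov_chain; auto. split.
  clear IHm. induction m. lra. pose proof (Hq m ltac:(lia)). pose proof (IHm ltac:(intros; apply Hq; lia)). lra.
  apply Hq; lia.
Qed.

Lemma ov_pos_close u v x y xi eta d :
  u <= xi <= v -> x <= eta <= y -> v - u < d -> y - x < d -> ov u v x y > 0 -> Rabs (xi - eta) < 2 * d.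
Proof. intros. unfold ov, Rmax, Rmin in *. apply Rabs_def1; repeat destruct Rle_dec; lra. Qed.

Lemma RS_as_double {X : Banach} (g : R -> X) a b n p xi m q eta d d' :
  tagged a b n p xi d -> tagged a b m q eta d' ->
  RS g n p xi = bsum n (fun k => bsum m (fun j => bscal (ov (p k) (p (S k)) (q j) (q (S j))) (g (xi k)))).
Proof.
  intros Hp Hq. unfold RS. apply bsum_ext. intros k Hk. rewrite <- rsum_bscal. f_equal.
  pose proof Hq as [Q0 [Qm Q]]. pose proof Hp as [_ [_ P]]. destruct (P k Hk) as [Pk _].
  rewrite ov_sum. rewrite Q0, Qm. symmetry. apply ov_full.
  pose proof (tagged_range _ _ _ _ _ _ Hp k ltac:(lia)). lra.
  pose proof (tagged_range _ _ _ _ _ _ Hp (S k) ltac:(lia)). lra. lra.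
  intros j Hj. destruct (Q j Hj). lra.
Qed.

Lemma RS_compare {X : Banach} (g : R -> X) a b n p xi m q eta d eps :
  tagged a b n p xi d -> tagged a b m q eta d ->
  (forall x y, a <= x <= b -> a <= y <= b -> Rabs (x - y) < 2 * d -> bnorm (bsub (g x) (g y)) < eps) ->
  bnorm (bsub (RS g n p xi) (RS g m q eta)) <= eps * (b - a).
Proof.
  intros Hp Hq Hg. rewrite (RS_as_double g a b n p xi m q eta d d Hp Hq).
  rewrite (RS_as_double g a b m q eta n p xi d d Hq Hp).
  rewrite (bsum_exchange m n).
  rewrite <- bsum_sub. eapply Rle_trans. apply bsum_norm.
  pose proof Hp as [P0 [Pn P]]. pose proof Hq as [Q0 [Qm Q]].
  rewrite <- P0, <- Pn, <- rsum_tele, <- rsum_scal. apply rsum_le. intros k Hk.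
  rewrite <- bsum_sub. eapply Rle_trans. apply bsum_norm. destruct (P k Hk) as [Pk Pd].
  rewrite <- (ov_full a b (p k) (p (S k))).
  2:{ pose proof (tagged_range _ _ _ _ _ _ Hp k ltac:(lia)). lra. }
  2:{ pose proof (tagged_range _ _ _ _ _ _ Hp (S k) ltac:(lia)). lra. }
  rewrite <- Q0, <- Qm, <- ov_sum. 2: lra. 2: { intros j Hj. destruct (Q j Hj). lra. }
  rewrite <- rsum_scal. apply rsum_le. intros j Hj. rewrite (ov_sym (q j)).
  rewrite <- bscal_sub, bnorm_scal. rewrite Rabs_right by (apply Rle_ge, ov_nonneg).
  destruct (Q j Hj) as [Qj Qd]. pose proof (ov_nonneg (p k) (p (S k)) (q j) (q (S j))).
  destruct (Req_dec (ov (p k) (p (S k)) (q j) (q (S j))) 0) as [E|E].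
  rewrite E. lra. rewrite (Rmult_comm eps). apply Rmult_le_compat_l. lra. left. apply Hg.
  pose proof (tagged_range _ _ _ _ _ _ Hp k ltac:(lia)). pose proof (tagged_range _ _ _ _ _ _ Hp (S k) ltac:(lia)). lra.
  pose proof (tagged_range _ _ _ _ _ _ Hq j ltac:(lia)). pose proof (tagged_range _ _ _ _ _ _ Hq (S j) ltac:(lia)). lra.
  apply (ov_pos_close (p k) (p (S k)) (q j) (q (S j))); auto; lra.
Qed.


Lemma nat_large x : exists N : nat, x < INR N.
Proof.
  destruct (archimed x) as [H1 _]. destruct (Z_le_gt_dec 0 (up x)) as [Hz|Hz].
  exists (Z.to_nat (up x)). rewrite INR_IZR_INZ, Z2Nat.id; auto.
  exists 0%nat. simpl. assert (IZR (up x) < 0) by (apply IZR_lt; lia). lra.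
Qed.

Definition upart a b n k := a + INR k * ((b - a) / INR n).

Lemma upart_tagged a b n d : a <= b -> (b - a) / INR (S n) < d ->
  tagged a b (S n) (upart a b (S n)) (upart a b (S n)) d.
Proof.
  intros Hab Hd. assert (HS : INR (S n) > 0) by (apply lt_0_INR; lia).
  assert (Hst : 0 <= (b - a) / INR (S n)) by (unfold Rdiv; apply Rmult_le_pos; [lra|left; apply Rinv_0_lt_compat; lra]).
  unfold upart. split. simpl. ring. split. field. lra.
  set (h := (b - a) / INR (S n)) in *.
  intros k Hk. rewrite (S_INR k). split. lra. lra.
Qed.

Lemma mesh_small a b d N m : a <= b -> d > 0 -> (b - a) / d < INR N -> (N <= m)%nat ->
  (b - a) / INR (S m) < d.
Proof.
  intros Hab Hd HN Hm. assert (HS : INR (S m) > 0) by (apply lt_0_INR; lia).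
  assert (INR N <= INR (S m)) by (apply le_INR; lia).
  apply Rmult_lt_reg_r with (INR (S m)). lra. unfold Rdiv. rewrite Rmult_assoc, Rinv_l by lra.
  rewrite Rmult_1_r. apply Rmult_lt_compat_r with (r := d) in HN; auto.
  unfold Rdiv in HN. rewrite Rmult_assoc, Rinv_l, Rmult_1_r in HN by lra. nra.
Qed.

Lemma tagged_exists a b d : a <= b -> d > 0 -> exists n p xi, tagged a b n p xi d.
Proof.
  intros Hab Hd. destruct (nat_large ((b - a) / d)) as [N HN].
  exists (S N), (upart a b (S N)), (upart a b (S N)). apply upart_tagged; auto.
  eapply mesh_small; eauto.
Qed.

Lemma RInt_exists {X : Banach} (g : R -> X) D a b :
  a <= b -> (forall r, a <= r <= b -> D r) -> cont_on g D -> exists I, is_RInt g a b I.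
Proof.
  intros Hab HD Hg.
  set (U := fun m => RS g (S m) (upart a b (S m)) (upart a b (S m))).
  assert (Hunif := unif_cont g D a b Hab HD Hg).
  destruct (bcomplete U) as [I HI].
  { intros eps Heps. set (e := eps / (b - a + 1)). assert (He : e > 0) by (apply Rdiv_lt_0_compat; lra).
    destruct (Hunif e He) as [d [Hd K]].
    destruct (nat_large ((b - a) / (d/2))) as [N HN]. exists N. intros m m' Hm Hm'.
    eapply Rle_lt_trans. apply (RS_compare g a b _ _ _ _ _ _ (d/2) e).
    apply upart_tagged; auto. apply (mesh_small a b (d/2) N); auto; lra.
    apply upart_tagged; auto. apply (mesh_small a b (d/2) N); auto; lra.
    intros x y Hx Hy Hxy. apply K; auto. lra.
    apply Rlt_le_trans with (e * (b - a + 1)). apply Rmult_lt_compat_l; lra.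
    right. unfold e. field. lra. }
  exists I. apply is_RInt_tagged. intros eps Heps.
  set (e := eps / (2 * (b - a + 1))). assert (He : e > 0) by (apply Rdiv_lt_0_compat; lra).
  destruct (Hunif e He) as [d [Hd K]]. exists (d/2). split. lra.
  intros n p xi Ht.
  destruct (nat_large ((b - a) / (d/2))) as [N1 HN1].
  destruct (HI (eps/2)) as [N2 HN2]. lra.
  set (m := Nat.max N1 N2).
  eapply Rle_lt_trans. apply (bsub_triangle _ (U m)).
  assert (bnorm (bsub (U m) I) < eps/2) by (apply HN2; unfold m; lia).
  assert (bnorm (bsub (RS g n p xi) (U m)) <= e * (b - a)).
  { apply (RS_compare g a b _ _ _ _ _ _ (d/2) e); auto.
    apply upart_tagged; auto. apply (mesh_small a b (d/2) N1); auto; try lra. unfold m; lia.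
    intros x y Hx Hy Hxy. apply K; auto. lra. }
  assert (e * (b - a) < eps / 2).
  { apply Rlt_le_trans with (e * (2 * (b - a + 1)) / 2). nra.
    right. unfold e. field. lra. }
  lra.
Qed.

Lemma tagged_concat {X : Banach} (g : R -> X) a c b n1 p1 x1 n2 p2 x2 d :
  tagged a c n1 p1 x1 d -> tagged c b n2 p2 x2 d ->
  let pc := fun k => if Nat.leb k n1 then p1 k else p2 (k - n1)%nat in
  let xc := fun k => if Nat.ltb k n1 then x1 k else x2 (k - n1)%nat in
  tagged a b (n1 + n2) pc xc d /\
  RS g (n1 + n2) pc xc = badd (RS g n1 p1 x1) (RS g n2 p2 x2).
Proof.
  intros H1 H2 pc xc. destruct H1 as [A0 [An1 A]]. destruct H2 as [B0 [Bn2 B]].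
  assert (Pc1 : forall k, (k <= n1)%nat -> pc k = p1 k).
  { intros k Hk. unfold pc. destruct (Nat.leb_spec k n1); auto. lia. }
  assert (Pc2 : forall k, (n1 <= k)%nat -> pc k = p2 (k - n1)%nat).
  { intros k Hk. unfold pc. destruct (Nat.leb_spec k n1); auto.
    replace k with n1 by lia. rewrite Nat.sub_diag, B0, An1. auto. }
  assert (Xc1 : forall k, (k < n1)%nat -> xc k = x1 k).
  { intros k Hk. unfold xc. destruct (Nat.ltb_spec k n1); auto. lia. }
  assert (Xc2 : forall k, (n1 <= k)%nat -> xc k = x2 (k - n1)%nat).
  { intros k Hk. unfold xc. destruct (Nat.ltb_spec k n1); auto. lia. }
  split. split. rewrite Pc1 by lia. auto. split. rewrite Pc2 by lia. replace (n1 + n2 - n1)%nat with n2 by lia. auto.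
  intros k Hk. destruct (Nat.lt_ge_cases k n1).
  rewrite !Pc1, Xc1 by lia. apply A; auto.
  rewrite !Pc2, Xc2 by lia. replace (S k - n1)%nat with (S (k - n1)) by lia. apply B; lia.
  unfold RS. rewrite bsum_split. f_equal.
  apply bsum_ext. intros k Hk. rewrite !Pc1, Xc1 by lia. auto.
  apply bsum_ext. intros k Hk. rewrite !Pc2, Xc2 by lia.
  replace (S (n1 + k) - n1)%nat with (S k) by lia. replace (n1 + k - n1)%nat with k by lia. auto.
Qed.

Lemma bsub_sub_common {X : Banach} (a b c : X) : bsub (bsub a c) (bsub b c) = bsub a b.
Proof. rewrite bsub_sub_sub, bsub_diag. apply bsub_0r. Qed.

Lemma bsub3 {X : Banach} (r1 r2 i w : X) :
  bsub (bsub (badd r1 r2) i) w = badd (bsub r1 i) (bsub r2 w).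
Proof.
  unfold bsub. rewrite <- !badd_assoc. f_equal.
  rewrite (badd_comm r2), !badd_assoc. rewrite <- !badd_assoc. f_equal. apply badd_comm.
Qed.

Lemma RInt_incr {X : Banach} (g : R -> X) a t s It Is c M :
  a <= t -> t <= s -> is_RInt g a t It -> is_RInt g a s Is ->
  (forall r, t <= r <= s -> bnorm (bsub (g r) c) <= M) ->
  bnorm (bsub (bsub Is It) (bscal (s - t) c)) <= M * (s - t).
Proof.
  intros Hat Hts Ht Hs HM. apply bnorm_le_eps. intros eps Heps.
  pose proof (proj1 (is_RInt_tagged _ _ _ _) Ht) as Ht0. pose proof (proj1 (is_RInt_tagged _ _ _ _) Hs) as Hs0. clear Ht Hs. rename Ht0 into Ht. rename Hs0 into Hs.
  destruct (Ht (eps/2)) as [d1 [Hd1 K1]]. lra.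
  destruct (Hs (eps/2)) as [d2 [Hd2 K2]]. lra.
  set (d := Rmin d1 d2). assert (Hd : d > 0) by (apply Rmin_pos; lra).
  pose proof (Rmin_l d1 d2). pose proof (Rmin_r d1 d2). fold d in H, H0.
  destruct (tagged_exists a t d Hat Hd) as [n1 [p1 [x1 T1]]].
  destruct (tagged_exists t s d Hts Hd) as [n2 [p2 [x2 T2]]].
  destruct (tagged_concat g a t s n1 p1 x1 n2 p2 x2 d T1 T2) as [T E].
  assert (T1' : tagged a t n1 p1 x1 d1).
  { destruct T1 as [Q1 [Q2 Q3]]. split; auto. split; auto. intros k Hk. destruct (Q3 k Hk). split; auto. lra. }
  set (pc := fun k : nat => if k <=? n1 then p1 k else p2 (k - n1)%nat) in *.
  set (xc := fun k : nat => if k <? n1 then x1 k else x2 (k - n1)%nat) in *.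
  assert (T' : tagged a s (n1 + n2) pc xc d2).
  { destruct T as [Q1 [Q2 Q3]]. split. exact Q1. split. exact Q2. intros k Hk. destruct (Q3 k Hk). split; auto. lra. }
  pose proof (K1 _ _ _ T1') as E1. pose proof (K2 _ _ _ T') as E2. rewrite E in E2.
  pose proof (RS_bound g t s n2 p2 x2 d c M T2 HM) as E3.
  eapply Rle_trans. apply (bsub_triangle _ (bsub (badd (RS g n1 p1 x1) (RS g n2 p2 x2)) It)).
  rewrite bsub_sub_common, bsub3. rewrite bnorm_sub_sym in E2.
  pose proof (bnorm_triangle (bsub (RS g n1 p1 x1) It) (bsub (RS g n2 p2 x2) (bscal (s - t) c))).
  lra.
Qed.

Lemma bprimitive {X : Banach} (g : R -> X) a :
  cont_on g (fun t => a <= t) ->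
  exists G, G a = bzero /\ deriv_on G (fun t => a <= t) g /\ (forall t, a <= t -> is_RInt g a t (G t)).
Proof.
  intros Hg.
  assert (Hc : forall t, {I | a <= t -> is_RInt g a t I}).
  { intros t. apply constructive_indefinite_description.
    destruct (classic (a <= t)).
    destruct (RInt_exists g _ a t H (fun r Hr => proj1 Hr) Hg) as [I HI]. exists I; auto.
    exists bzero. intros; contradiction. }
  set (G := fun t => proj1_sig (Hc t)).
  assert (HG : forall t, a <= t -> is_RInt g a t (G t)).
  { intros t Ht. unfold G. destruct (Hc t); simpl; auto. }
  exists G. split.
  { apply bnorm_small_eq. intros eps Heps. destruct (HG a (Rle_refl a) eps Heps) as [d [Hd K]].
    rewrite bnorm_sub_sym.
    specialize (K O (fun _ => a) (fun _ => a) eq_refl eq_refl). simpl in K. apply K. intros; lia. }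
  split; auto.
  intros t Ht eps Heps. destruct (Hg t Ht (eps/2)) as [d [Hd K]]. lra.
  exists d. split; auto. intros s Hs Hst Hsd.
  assert (Kb : forall r, Rmin t s <= r <= Rmax t s -> bnorm (bsub (g r) (g t)) <= eps/2).
  { intros r Hr. destruct (Req_dec r t). subst. rewrite bsub_diag, bnorm_zero. lra.
    left. apply K; auto. pose proof (Rmin_l t s). pose proof (Rmin_r t s). unfold Rmin in Hr. destruct (Rle_dec t s); lra.
    unfold Rmin, Rmax in Hr. destruct (Rle_dec t s); apply Rabs_def2 in Hsd; apply Rabs_def1; lra. }
  assert (E : bsub (dq G t s) (g t) = bscal (/ (s - t)) (bsub (bsub (G s) (G t)) (bscal (s - t) (g t)))).
  { unfold dq. rewrite (bscal_sub (/ (s - t)) (bsub (G s) (G t))), bscal_assoc, Rinv_l, bscal_1. auto. lra. }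
  change (bnorm (bsub (dq G t s) (g t)) < eps). rewrite E, bnorm_scal.
  assert (Hn : bnorm (bsub (bsub (G s) (G t)) (bscal (s - t) (g t))) <= eps/2 * Rabs (s - t)).
  { destruct (Rle_dec t s) as [Hle|Hle].
    rewrite Rabs_right by lra. apply (RInt_incr g a t s); auto. intros r0 Hr. apply Kb.
    rewrite Rmin_left, Rmax_right; lra.
    rewrite Rabs_left by lra.
    replace (bsub (bsub (G s) (G t)) (bscal (s - t) (g t))) with (bopp (bsub (bsub (G t) (G s)) (bscal (t - s) (g t)))).
    rewrite bnorm_opp. replace (- (s - t)) with (t - s) by ring. apply (RInt_incr g a s t); auto. lra.
    intros r0 Hr. apply Kb. rewrite Rmin_right, Rmax_left; lra.
    unfold bsub. rewrite !bopp_add, !bopp_opp, !bopp_scal_comm. replace (- (s - t)) with (t - s) by ring.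
    f_equal. apply badd_comm. }
  rewrite Rabs_inv by lra.
  assert (Rabs (s - t) > 0) by (apply Rabs_pos_lt; lra).
  apply Rle_lt_trans with (/ Rabs (s - t) * (eps / 2 * Rabs (s - t))).
  apply Rmult_le_compat_l; auto. left; apply Rinv_0_lt_compat; lra.
  replace (/ Rabs (s - t) * (eps / 2 * Rabs (s - t))) with (eps/2) by (field; lra). lra.
Qed.


Definition glue {X : Banach} (c : R) (G : R -> X) (t : R) : X :=
  if Rle_dec t c then bzero else G t.

Lemma glue_cont {X : Banach} (G : R -> X) c :
  cont_on G (fun t => c <= t) -> G c = bzero -> cont_on (glue c G) (fun _ => True).
Proof.
  intros HG Hc t _. destruct (Rtotal_order t c) as [Hlt|[Heq|Hgt]].
  - apply lim_in_local with (h := fun _ => bzero) (D' := fun _ => True) (r := c - t). lra.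
    intros s _ _ Hs. split; auto. unfold glue. destruct Rle_dec; auto. apply Rabs_def2 in Hs. lra.
    unfold glue. destruct Rle_dec; [|lra]. apply lim_in_const.
  - subst t. intros eps Heps. destruct (HG c (Rle_refl c) eps Heps) as [d [Hd K]].
    exists d. split; auto. intros s _ Hs Hsd. unfold glue. destruct (Rle_dec c c); [|lra].
    destruct (Rle_dec s c). rewrite bsub_diag, bnorm_zero; lra.
    rewrite <- Hc. apply K; auto. lra.
  - apply lim_in_local with (h := G) (D' := fun t => c <= t) (r := t - c). lra.
    intros s _ _ Hs. apply Rabs_def2 in Hs. split. lra. unfold glue. destruct Rle_dec; auto. lra.
    unfold glue. destruct Rle_dec; [lra|]. apply HG. lra.
Qed.

Lemma prim_R_ex {X : Banach} (g : R -> X) :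
  exists H, (cont_on g (fun _ => True) /\ (forall t, t <= 0 -> g t = bzero)) ->
    (deriv_on H (fun _ => True) g /\ (forall t, t <= 0 -> H t = bzero)).
Proof.
  destruct (classic (cont_on g (fun _ => True) /\ (forall t, t <= 0 -> g t = bzero))) as [[Hg Hz]|Hn].
  2:{ exists g. intros; contradiction. }
  destruct (bprimitive g (-1)) as [G0 [G0a [G0d _]]].
  { eapply cont_sub_set. apply Hg. intros; exact I. }
  assert (G0z : forall t, -1 <= t <= 0 -> G0 t = bzero).
  { intros t Ht. rewrite <- G0a. apply (deriv_zero_const G0 (fun s => -1 <= s <= t)). lra.
    intros; lra.
    apply (deriv_ext G0 G0 (fun _ => bzero) g). intros; auto. intros s Hs. symmetry. apply Hz; lra.
    eapply deriv_sub_set. apply G0d. simpl; intros; lra. }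
  exists (glue 0 G0). intros _. split.
  - intros t _. destruct (Rle_dec t (-1/2)).
    + rewrite Hz by lra. apply lim_in_local with (h := fun _ => bzero) (D' := fun _ => True) (r := 1/2). lra.
      intros s _ _ Hs. apply Rabs_def2 in Hs. split; auto. unfold dq, glue.
      destruct Rle_dec; [|lra]. destruct Rle_dec; [|lra]. rewrite bsub_diag, bscal_zero. auto.
      apply lim_in_const.
    + assert (E : forall s, -1 <= s -> glue 0 G0 s = G0 s).
      { intros s Hs. unfold glue. destruct Rle_dec; auto. rewrite G0z; auto. }
      apply (deriv_local _ G0 g (fun _ => True) (fun s => -1 <= s) t (t + 1)); auto; try lra.
      apply E; lra. intros s _ _ Hs. apply Rabs_def2 in Hs. split. lra. apply E; lra.
      apply G0d. lra.
  - intros t Ht. unfold glue. destruct Rle_dec; auto. lra.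
Qed.

Definition primR {X : Banach} (g : R -> X) : R -> X :=
  proj1_sig (constructive_indefinite_description _ (prim_R_ex g)).

Lemma primR_spec {X : Banach} (g : R -> X) :
  cont_on g (fun _ => True) -> (forall t, t <= 0 -> g t = bzero) ->
  deriv_on (primR g) (fun _ => True) g /\ (forall t, t <= 0 -> primR g t = bzero).
Proof.
  intros H1 H2. unfold primR. destruct (constructive_indefinite_description _ (prim_R_ex g)) as [H HH].
  simpl. apply HH; auto.
Qed.

Lemma prim0_ex {X : Banach} (f : R -> X) :
  exists G, cont_on f (fun t => 0 <= t) -> G 0 = bzero /\ deriv_on G (fun t => 0 <= t) f.
Proof.
  destruct (classic (cont_on f (fun t => 0 <= t))) as [Hf|Hn].
  destruct (bprimitive f 0 Hf) as [G [G0 [Gd _]]]. exists G; auto.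
  exists f; intros; contradiction.
Qed.

Definition Q0 {X : Banach} (f : R -> X) : R -> X :=
  glue 0 (proj1_sig (constructive_indefinite_description _ (prim0_ex f))).

Lemma Q0_spec {X : Banach} (f : R -> X) :
  cont_on f (fun t => 0 <= t) ->
  cont_on (Q0 f) (fun _ => True) /\ (forall t, t <= 0 -> Q0 f t = bzero) /\
  deriv_on (Q0 f) (fun t => 0 <= t) f.
Proof.
  intros Hf. unfold Q0. destruct (constructive_indefinite_description _ (prim0_ex f)) as [G HG].
  simpl. destruct (HG Hf) as [G0 Gd]. split; [|split].
  - apply glue_cont; auto. eapply deriv_cont; eauto.
  - intros t Ht. unfold glue. destruct Rle_dec; auto. lra.
  - apply deriv_ext with (H := G) (h := f); auto. intros s Hs. unfold glue. destruct Rle_dec; auto.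
    replace s with 0 by lra. auto.
Qed.

Fixpoint Qn {X : Banach} (f : R -> X) (n : nat) : R -> X :=
  match n with O => Q0 f | S m => primR (Qn f m) end.

Lemma Qn_spec {X : Banach} (f : R -> X) :
  cont_on f (fun t => 0 <= t) ->
  forall n, cont_on (Qn f n) (fun _ => True) /\ (forall t, t <= 0 -> Qn f n t = bzero) /\
    deriv_on (Qn f (S n)) (fun _ => True) (Qn f n).
Proof.
  intros Hf. induction n.
  - destruct (Q0_spec f Hf) as [A [B C]]. split; auto. split; auto.
    simpl. apply primR_spec; auto.
  - destruct IHn as [A [B C]]. destruct (primR_spec (Qn f n) A B) as [D E].
    assert (Ha : cont_on (Qn f (S n)) (fun _ => True)) by (eapply deriv_cont; eauto).
    split; auto. split; auto. simpl. apply primR_spec; auto.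
Qed.


Lemma INR_Z_to_nat z : IZR z <= INR (Z.to_nat z).
Proof.
  destruct (Z_le_gt_dec 0 z). rewrite INR_IZR_INZ, Z2Nat.id by lia; lra.
  replace (Z.to_nat z) with O by (destruct z; simpl; auto; lia). simpl. assert (IZR z < 0) by (apply IZR_lt; lia). lra.
Qed.

Definition NN (tau s : R) : nat := Z.to_nat (up (s / (2 * tau))).

Lemma NN_spec tau s : tau > 0 -> s <= INR (NN tau s) * (2 * tau).
Proof.
  intros Ht. unfold NN. pose proof (INR_Z_to_nat (up (s / (2 * tau)))).
  destruct (archimed (s / (2 * tau))) as [H1 _].
  assert (s / (2 * tau) <= INR (Z.to_nat (up (s / (2 * tau))))) by lra.
  apply Rmult_le_compat_r with (r := 2 * tau) in H0. 2: lra.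
  unfold Rdiv in H0. rewrite Rmult_assoc, Rinv_l, Rmult_1_r in H0 by lra. auto.
Qed.

Lemma N_exists tau s : tau > 0 -> exists N, s <= INR N * (2 * tau).
Proof. intros. exists (NN tau s). apply NN_spec; auto. Qed.

Lemma opow_zero_vec {X : Banach} (Om : X -> X) k : blinear Om -> opow Om k bzero = bzero.
Proof. intros H. apply blin_zero. apply opow_linear; auto. Qed.

Lemma existence {X : Banach} (Om : X -> X) (tau : R) (f : R -> X) :
  blinear Om -> bbounded Om -> tau > 0 -> cont_on f (fun t => 0 <= t) ->
  exists x : R -> X, classical_solution tau Om f x.
Proof.
  intros HL HB Htau Hf.
  set (Q := Qn f). pose proof (Qn_spec f Hf) as HQ. fold Q in HQ.
  pose proof (Q0_spec f Hf) as [_ [_ HQ0]].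
  assert (HQ0' : deriv_on (Q O) (fun t => 0 <= t) f) by exact HQ0.
  assert (QZ : forall n u, u <= 0 -> Q n u = bzero) by (intros n u Hu; apply (HQ n); auto).
  set (term := fun m s => opow Om (2 * m) (Q (S (2 * m)) (s - INR m * (2 * tau)))).
  set (term1 := fun m s => opow Om (2 * m) (Q (2 * m)%nat (s - INR m * (2 * tau)))).
  set (x := fun s => bsum (NN tau s) (fun m => term m s)).
  set (x1 := fun s => bsum (NN tau s) (fun m => term1 m s)).
  set (x2p := fun s => badd (f s) (Om (Om (x (s - 2 * tau))))).
  assert (Harg : forall N s m, s <= INR N * (2 * tau) -> (N <= m)%nat -> s - INR m * (2 * tau) <= 0).
  { intros N s m Hs Hm. apply le_INR in Hm. nra. }
  assert (termZ : forall N s m, s <= INR N * (2 * tau) -> (N <= m)%nat -> term m s = bzero).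
  { intros. unfold term. rewrite QZ. apply opow_zero_vec; auto. eapply Harg; eauto. }
  assert (term1Z : forall N s m, s <= INR N * (2 * tau) -> (N <= m)%nat -> term1 m s = bzero).
  { intros. unfold term1. rewrite QZ. apply opow_zero_vec; auto. eapply Harg; eauto. }
  assert (xeq : forall N s, s <= INR N * (2 * tau) -> x s = bsum N (fun m => term m s)).
  { intros N s Hs. unfold x. apply bsum_eq_zero_tail; intros k Hk. apply (termZ (NN tau s) s k); auto. apply NN_spec; auto. apply (termZ N s k); auto. }
  assert (x1eq : forall N s, s <= INR N * (2 * tau) -> x1 s = bsum N (fun m => term1 m s)).
  { intros N s Hs. unfold x1. apply bsum_eq_zero_tail; intros k Hk. apply (term1Z (NN tau s) s k); auto. apply NN_spec; auto. apply (term1Z N s k); auto. }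
  assert (HopL : forall k, blinear (opow Om k)) by (intros; apply opow_linear; auto).
  assert (HopB : forall k, bbounded (opow Om k)) by (intros; apply opow_bounded; auto).
  assert (Dx : deriv_on x (fun _ => True) x1).
  { intros t _. destruct (N_exists tau (t + 1) Htau) as [N HN].
    apply (deriv_local _ (fun s => bsum N (fun m => term m s)) x1 (fun _ => True) (fun _ => True) t 1); auto; try lra.
    apply xeq; lra. intros s _ _ Hs. apply Rabs_def2 in Hs. split; auto. apply xeq; lra.
    rewrite (x1eq N t) by lra.
    apply (deriv_bsum N (fun m s => term m s) (fun m s => term1 m s)); auto.
    intros m Hm. unfold term, term1. apply deriv_op; auto.
    apply (deriv_shift (Q (S (2 * m))) (Q (2 * m)%nat) (fun _ => True)); auto. apply HQ. }
  assert (Cx : cont_on x (fun _ => True)) by (eapply deriv_cont; eauto).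
  assert (Cx1 : cont_on x1 (fun _ => True)).
  { intros t _. destruct (N_exists tau (t + 1) Htau) as [N HN].
    apply lim_in_local with (h := fun s => bsum N (fun m => term1 m s)) (D' := fun _ => True) (r := 1). lra.
    intros s _ _ Hs. apply Rabs_def2 in Hs. split; auto. apply x1eq; lra.
    rewrite (x1eq N t) by lra.
    apply (cont_bsum N (fun m s => term1 m s)); auto. intros m Hm. unfold term1.
    apply cont_op; auto. apply (cont_shift (Q (2 * m)%nat) (fun _ => True)); auto. apply HQ. }
  assert (x1Z : forall s, s <= 0 -> x1 s = bzero).
  { intros s Hs. unfold x1. apply bsum_zero. intros k Hk. eapply term1Z with (N := O); auto. simpl; lra. lia. }
  assert (xZ : forall s, s <= 0 -> x s = bzero).
  { intros s Hs. unfold x. apply bsum_zero. intros k Hk. eapply termZ with (N := O); auto. simpl; lra. lia. }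
  exists x. unfold classical_solution. exists x1, (fun _ => bzero), x2p.
  split; [|split; [|split; [|split; [|split; [|split; [|split]]]]]].
  - eapply deriv_sub_set; eauto. intros; exact I.
  - eapply cont_sub_set; eauto. intros; exact I.
  - apply deriv_zero. intros s Hs. apply x1Z. lra.
  - apply cont_const.
  - intros t Ht. destruct (N_exists tau (t + 1) Htau) as [N HN].
    set (H := fun s => badd (term1 O s) (bsum N (fun m => term1 (S m) s))).
    assert (E1 : forall s, s <= t + 1 -> x1 s = H s).
    { intros s Hs. unfold H. rewrite <- (bsum_shift N (fun m => term1 m s)). apply x1eq. rewrite S_INR. lra. }
    apply (deriv_local _ H x2p (fun t => 0 <= t) (fun t => 0 <= t) t 1); auto; try lra.
    apply E1; lra. intros s Hs _ Hs2. apply Rabs_def2 in Hs2. split; auto. apply E1; lra.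
    assert (DH : deriv_on H (fun t => 0 <= t)
       (fun s => badd (opow Om (2 * 0) (f (s - INR 0 * (2 * tau))))
          (bsum N (fun m => opow Om (2 * S m) (Q (S (2 * m)) (s - INR (S m) * (2 * tau))))))).
    { apply deriv_add.
      - unfold term1. apply deriv_op; auto. apply (deriv_shift (Q O) f (fun t => 0 <= t)); auto.
        intros s Hs. simpl. lra.
      - apply (deriv_bsum N (fun m s => term1 (S m) s)). intros m Hm. unfold term1.
        apply deriv_op; auto. replace (2 * S m)%nat with (S (S (2 * m))) by lia.
        apply (deriv_shift (Q (S (S (2 * m)))) (Q (S (2 * m))) (fun _ => True)); auto. apply HQ. }
    replace (x2p t) with (badd (opow Om (2 * 0) (f (t - INR 0 * (2 * tau))))
          (bsum N (fun m => opow Om (2 * S m) (Q (S (2 * m)) (t - INR (S m) * (2 * tau)))))).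
    apply DH; auto.
    unfold x2p. simpl (opow Om (2 * 0)). replace (t - INR 0 * (2 * tau)) with t by (simpl; ring). f_equal.
    rewrite (xeq N) by lra. rewrite !(bsum_lin Om) by auto. apply bsum_ext. intros m Hm.
    unfold term. replace (2 * S m)%nat with (S (S (2 * m))) by lia. simpl (opow Om (S (S _))).
    cbv beta. change (m + (m + 0))%nat with (2 * m)%nat. do 4 f_equal. rewrite S_INR; ring.
  - apply cont_add. auto.
    apply cont_op; auto. apply cont_op; auto. apply (cont_shift x (fun _ => True)); auto.
  - intros t Ht. unfold x2p. apply badd_sub_cancel.
  - intros t Ht. apply xZ. lra.
Qed.


Definition pp (k : nat) (u : R) : R := (Rmax 0 u) ^ k.

Lemma pp_pos k u : 0 <= u -> pp k u = u ^ k.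
Proof. intros. unfold pp. rewrite Rmax_right; auto. Qed.

Lemma pp_neg k u : u <= 0 -> pp (S k) u = 0.
Proof. intros. unfold pp. rewrite Rmax_left; auto. simpl. ring. Qed.

Lemma pow_le_one_aux x k : 0 <= x <= 1 -> 0 <= x ^ k <= 1.
Proof. intros H. induction k; simpl. lra. split. apply Rmult_le_pos; lra. nra. Qed.

Lemma dpl_local (f g : R -> R) u l r :
  r > 0 -> (forall v, Rabs (v - u) < r -> f v = g v) -> derivable_pt_lim g u l -> derivable_pt_lim f u l.
Proof.
  intros Hr E H eps Heps. destruct (H eps Heps) as [d K].
  assert (Hp : 0 < Rmin d r) by (apply Rmin_pos; [apply cond_pos|lra]).
  exists (mkposreal _ Hp). intros h Hh0 Hh. simpl in Hh.
  pose proof (Rmin_l d r). pose proof (Rmin_r d r).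
  rewrite (E (u + h)), (E u). apply K; auto. lra.
  replace (u - u) with 0 by ring. rewrite Rabs_R0. lra.
  replace (u + h - u) with h by ring. lra.
Qed.

Lemma dpl_ext (f g : R -> R) u l :
  (forall v, f v = g v) -> derivable_pt_lim g u l -> derivable_pt_lim f u l.
Proof. intros E. apply dpl_local with (r := 1). lra. intros; auto. Qed.

Lemma dpl_zero u : derivable_pt_lim (fun _ => 0) u 0.
Proof. exact (derivable_pt_lim_const 0 u). Qed.

Lemma pp_deriv k u : derivable_pt_lim (pp (S (S k))) u (INR (S (S k)) * pp (S k) u).
Proof.
  destruct (Rtotal_order u 0) as [Hlt|[Heq|Hgt]].
  - rewrite pp_neg by lra. rewrite Rmult_0_r.
    apply dpl_local with (g := fun _ => 0) (r := - u). lra.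
    intros v Hv. apply Rabs_def2 in Hv. apply pp_neg. lra. apply dpl_zero.
  - subst u. rewrite pp_neg by lra. rewrite Rmult_0_r. intros eps Heps.
    assert (Hp : 0 < Rmin 1 eps) by (apply Rmin_pos; lra).
    exists (mkposreal _ Hp). intros h Hh0 Hh. simpl in Hh.
    pose proof (Rmin_l 1 eps). pose proof (Rmin_r 1 eps).
    rewrite Rplus_0_l, (pp_neg _ 0) by lra. rewrite Rminus_0_r, Rminus_0_r.
    unfold pp. set (m := Rmax 0 h).
    assert (Hm : 0 <= m <= Rabs h). { unfold m, Rmax. destruct Rle_dec. split. lra. apply Rle_abs. split; [lra|apply Rabs_pos]. }
    pose proof (pow_le_one_aux m k ltac:(lra)).
    assert (Rabs h > 0) by (apply Rabs_pos_lt; auto).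
    unfold Rdiv. rewrite Rabs_mult, Rabs_inv. rewrite (Rabs_right (m ^ _)) by (apply Rle_ge, pow_le; lra).
    assert (Hb : m ^ S (S k) <= Rabs h * Rabs h).
    { simpl. apply Rle_trans with (m * (m * 1)). apply Rmult_le_compat_l. lra. apply Rmult_le_compat_l; lra.
      apply Rmult_le_compat; lra. }
    apply Rle_lt_trans with (Rabs h * Rabs h * / Rabs h).
    apply Rmult_le_compat_r; auto. left; apply Rinv_0_lt_compat; lra.
    replace (Rabs h * Rabs h * / Rabs h) with (Rabs h) by (field; lra). lra.
  - apply dpl_local with (g := fun v => v ^ S (S k)) (r := u). lra.
    intros v Hv. apply Rabs_def2 in Hv. apply pp_pos. lra.
    rewrite pp_pos by lra. apply derivable_pt_lim_pow.
Qed.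

Lemma rmax_cont : forall u, continuity_pt (fun v => Rmax 0 v) u.
Proof.
  intros u eps Heps. exists eps. split; auto. intros v [_ Hv]. simpl in *. unfold R_dist in *.
  unfold Rmax. repeat destruct Rle_dec; apply Rabs_def2 in Hv; apply Rabs_def1; lra.
Qed.

Lemma pp_cont k u : continuity_pt (pp k) u.
Proof.
  induction k. apply continuity_pt_const. intros x y. reflexivity.
  change (continuity_pt (fun v => Rmax 0 v * pp k v) u).
  apply (continuity_pt_mult (fun v => Rmax 0 v) (pp k)); auto. apply rmax_cont.
Qed.

Lemma dpl_aff (phi : R -> R) t c s l :
  derivable_pt_lim phi (t - s - c) l -> derivable_pt_lim (fun s => phi (t - s - c)) s (- l).
Proof.
  intros H eps Heps. destruct (H eps Heps) as [d K]. exists d. intros h Hh0 Hh.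
  specialize (K (- h) ltac:(lra) ltac:(rewrite Rabs_Ropp; auto)).
  replace (t - (s + h) - c) with (t - s - c + - h) by ring.
  replace ((phi (t - s - c + - h) - phi (t - s - c)) / h - - l) with
    (- ((phi (t - s - c + - h) - phi (t - s - c)) / - h - l)) by (field; auto).
  rewrite Rabs_Ropp. auto.
Qed.

Lemma cont_aff (phi : R -> R) t c s :
  continuity_pt phi (t - s - c) -> continuity_pt (fun s => phi (t - s - c)) s.
Proof.
  intros H eps Heps. destruct (H eps Heps) as [d [Hd K]]. exists d. split; auto.
  intros x [[_ Hne] Hx]. simpl in *. unfold R_dist in *. apply K. split. split. exact I.
  intro E. apply Hne. lra.
  simpl. unfold R_dist. replace (t - x - c - (t - s - c)) with (- (x - s)) by ring. rewrite Rabs_Ropp. auto.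
Qed.

Lemma cont_div (phi : R -> R) K s : continuity_pt phi s -> continuity_pt (fun u => phi u / K) s.
Proof.
  intros H. change (continuity_pt (fun u => phi u * / K) s).
  apply (continuity_pt_mult phi (fun _ => / K)); auto. apply continuity_pt_const. intros x y; auto.
Qed.

Lemma dpl_div (phi : R -> R) K s l : derivable_pt_lim phi s l -> derivable_pt_lim (fun u => phi u / K) s (l / K).
Proof.
  intros H. apply dpl_ext with (g := mult_real_fct (/ K) phi). intros v. unfold mult_real_fct, Rdiv. ring.
  replace (l / K) with (/ K * l) by (unfold Rdiv; ring). apply derivable_pt_lim_scal; auto.
Qed.

Definition bm (tau : R) (m : nat) (u : R) : R := pp (2 * m + 1) (u - INR m * (2 * tau)) / INR (fact (2 * m + 1)).
Definition b1m (tau : R) (m : nat) (u : R) : R := pp (2 * m) (u - INR m * (2 * tau)) / INR (fact (2 * m)).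

Definition rder (phi phi' : R -> R) (D : R -> Prop) : Prop :=
  forall x, D x -> rlim_in (fun s => (phi s - phi x) / (s - x)) D x (phi' x).

Lemma rder_of_dpl phi phi' D : (forall x, D x -> derivable_pt_lim phi x (phi' x)) -> rder phi phi' D.
Proof. intros H x Dx. apply rlim_deriv; auto. Qed.

Lemma rder_ext phi psi phi' psi' D :
  (forall s, D s -> phi s = psi s) -> (forall s, D s -> phi' s = psi' s) -> rder psi psi' D -> rder phi phi' D.
Proof.
  intros E1 E2 H x Dx. rewrite E2; auto. apply rlim_local with (r2 := fun s => (psi s - psi x) / (s - x)) (D' := D) (r := 1). lra.
  intros s Ds _ _. split; auto. rewrite !E1; auto. apply H; auto.
Qed.

Lemma fact_ratio n x : INR (S n) * x / INR (fact (S n)) = x / INR (fact n).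
Proof. rewrite fact_simpl, mult_INR. field. split. apply INR_fact_neq_0. apply not_0_INR. lia. Qed.

Lemma bm_cont tau m c0 x : continuity_pt (fun s => bm tau m (c0 - s)) x.
Proof. unfold bm. apply (cont_aff (fun w => pp (2 * m + 1) w / INR (fact (2 * m + 1)))). apply cont_div, pp_cont. Qed.

Lemma bm_zero' tau m u : u <= INR m * (2 * tau) -> bm tau m u = 0.
Proof.
  intros Hu. unfold bm. replace (2 * m + 1)%nat with (S (2 * m)) by lia. rewrite pp_neg. unfold Rdiv; ring. lra.
Qed.

Lemma bm_zero tau m u : tau > 0 -> u <= 0 -> bm tau m u = 0.
Proof.
  intros Ht Hu. unfold bm. replace (2 * m + 1)%nat with (S (2 * m)) by lia. rewrite pp_neg. unfold Rdiv; ring.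
  pose proof (pos_INR m). nra.
Qed.

Lemma b1m_zero tau m u : tau > 0 -> (m >= 1)%nat -> u <= 0 -> b1m tau m u = 0.
Proof.
  intros Ht Hm Hu. unfold b1m. destruct m. lia. replace (2 * S m)%nat with (S (S (2 * m))) by lia. rewrite pp_neg. unfold Rdiv; ring.
  pose proof (pos_INR (S m)). nra.
Qed.

Lemma b10_val tau u : b1m tau 0 u = 1.
Proof. unfold b1m. simpl. unfold pp. simpl. field. Qed.

Definition chi (tau t : R) (m : nat) (s : R) : R :=
  match m with O => 0 | S m0 => bm tau m0 (t - s - 2 * tau) end.

Lemma phi_rder tau t m :
  rder (fun s => bm tau m (t - s)) (fun s => - b1m tau m (t - s)) (fun s => 0 <= s <= t).
Proof.
  destruct m.
  - apply rder_ext with (psi := fun s => t - s - 0) (psi' := fun _ => - 1).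
    intros s Hs. unfold bm. simpl INR. rewrite pp_pos by lra. simpl. field.
    intros s Hs. rewrite b10_val. auto.
    apply rder_of_dpl. intros x _. apply (dpl_aff id t 0 x 1). apply derivable_pt_lim_id.
  - apply rder_of_dpl. intros x _. unfold bm, b1m.
    apply (dpl_aff (fun w => pp (2 * S m + 1) w / INR (fact (2 * S m + 1)))).
    replace (2 * S m + 1)%nat with (S (S (S (2 * m)))) by lia.
    replace (2 * S m)%nat with (S (S (2 * m))) by lia.
    replace (pp (S (S (2 * m))) (t - x - INR (S m) * (2 * tau)) / INR (fact (S (S (2 * m)))))
      with (INR (S (S (S (2 * m)))) * pp (S (S (2 * m))) (t - x - INR (S m) * (2 * tau)) / INR (fact (S (S (S (2 * m)))))) by apply fact_ratio.
    apply dpl_div. apply pp_deriv.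
Qed.

Lemma psi_rder tau t m :
  rder (fun s => b1m tau m (t - s)) (fun s => - chi tau t m s) (fun s => 0 <= s <= t).
Proof.
  apply rder_of_dpl. intros x _. destruct m.
  - simpl chi. rewrite Ropp_0. apply dpl_ext with (g := fun _ => 1). intros; apply b10_val.
    apply (derivable_pt_lim_const 1 x).
  - unfold b1m, chi, bm. apply (dpl_aff (fun w => pp (2 * S m) w / INR (fact (2 * S m)))).
    replace (2 * S m)%nat with (S (S (2 * m))) by lia.
    replace (2 * m + 1)%nat with (S (2 * m)) by lia.
    replace (t - x - 2 * tau - INR m * (2 * tau)) with (t - x - INR (S m) * (2 * tau)) by (rewrite S_INR; ring).
    replace (pp (S (2 * m)) (t - x - INR (S m) * (2 * tau)) / INR (fact (S (2 * m))))
      with (INR (S (S (2 * m))) * pp (S (2 * m)) (t - x - INR (S m) * (2 * tau)) / INR (fact (S (S (2 * m))))) by apply fact_ratio.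
    apply dpl_div. apply pp_deriv.
Qed.


Definition kern {X : Banach} (Om : X -> X) (tau : R) (M : nat) (u : R) (v : X) : X :=
  bsum M (fun m => bscal (bm tau m u) (opow Om (2 * m) v)).

Lemma kern_add {X : Banach} (Om : X -> X) tau M u v w : blinear Om ->
  kern Om tau M u (badd v w) = badd (kern Om tau M u v) (kern Om tau M u w).
Proof.
  intros HL. unfold kern. rewrite <- bsum_add. apply bsum_ext. intros k _.
  rewrite (proj1 (opow_linear Om (2 * k) HL)), bscal_distr_l. auto.
Qed.

Lemma kern_op {X : Banach} (Om : X -> X) tau M u v : blinear Om ->
  kern Om tau M u (Om v) = Om (kern Om tau M u v).
Proof.
  intros HL. unfold kern. rewrite (bsum_lin Om) by auto. apply bsum_ext. intros k _.
  rewrite (proj2 HL), opow_comm. auto.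
Qed.

Lemma kern_zero {X : Banach} (Om : X -> X) tau M u : blinear Om -> kern Om tau M u bzero = bzero.
Proof.
  intros HL. unfold kern. apply bsum_zero. intros k _. rewrite (blin_zero (opow Om (2 * k))).
  apply bscal_zero. apply opow_linear; auto.
Qed.

Lemma kern_neg {X : Banach} (Om : X -> X) tau M u v : tau > 0 -> u <= 0 -> kern Om tau M u v = bzero.
Proof.
  intros Ht Hu. unfold kern. apply bsum_zero. intros k _. rewrite bm_zero by auto. apply bscal_0.
Qed.

Lemma kern_M {X : Banach} (Om : X -> X) tau M N u v : tau > 0 -> u <= INR N * (2 * tau) -> (N <= M)%nat ->
  kern Om tau M u v = kern Om tau N u v.
Proof.
  intros Ht Hu HNM. unfold kern. apply bsum_tail_zero; auto. intros k Hk.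
  rewrite bm_zero'. apply bscal_0. apply le_INR in Hk. nra.
Qed.

Definition ev (tau : R) (j : nat) (u : R) : R := pp j (u - (INR j - 1) * tau) / INR (fact j).

Lemma Int_part_facts u tau : tau > 0 -> 0 <= u ->
  let k := Z.to_nat (Int_part (u / tau) + 1) in
  (INR k - 1) * tau <= u /\ u < INR k * tau.
Proof.
  intros Ht Hu k. destruct (base_Int_part (u / tau)) as [H1 H2].
  set (z := Int_part (u / tau)) in *.
  assert (u / tau >= 0). { unfold Rdiv. apply Rle_ge, Rmult_le_pos; auto. left; apply Rinv_0_lt_compat; lra. }
  assert (Hz : (0 <= z)%Z). { assert (IZR z > -1) by lra. apply lt_IZR in H0. lia. }
  assert (Hk : INR k = IZR z + 1). { unfold k. rewrite INR_IZR_INZ, Z2Nat.id by lia. rewrite plus_IZR. auto. }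
  rewrite Hk. replace (IZR z + 1 - 1) with (IZR z) by ring.
  assert (E : u / tau * tau = u) by (field; lra).
  split. rewrite <- E. apply Rmult_le_compat_r; lra.
  rewrite <- E. apply Rmult_lt_compat_r; lra.
Qed.

Lemma exp_formula {X : Banach} tau (A : X -> X) J u v : tau > 0 -> - tau <= u ->
  (forall j, (J <= j)%nat -> u - (INR j - 1) * tau < 0) ->
  exp_tau tau A u v = bsum J (fun j => bscal (ev tau j u) (opow A j v)).
Proof.
  intros Ht Hu HJ. unfold exp_tau. destruct (Rlt_dec u (- tau)). lra.
  destruct (Rlt_dec u 0) as [Hneg|Hpos].
  - destruct J. specialize (HJ O (le_n 0)). simpl in HJ. lra.
    rewrite bsum_shift. rewrite bsum_zero. rewrite badd_0. unfold ev. simpl. unfold pp. simpl.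
    replace (1 / 1) with 1 by field. rewrite bscal_1. auto.
    intros k _. unfold ev. rewrite pp_neg. unfold Rdiv. rewrite Rmult_0_l. apply bscal_0.
    rewrite S_INR. pose proof (pos_INR k). nra.
  - cbv zeta. destruct (Int_part_facts u tau Ht ltac:(lra)) as [K1 K2].
    set (k := Z.to_nat (Int_part (u / tau) + 1)) in *.
    transitivity (bsum (S k) (fun j => bscal (ev tau j u) (opow A j v))).
    + apply bsum_ext. intros j Hj. unfold ev. rewrite pp_pos. auto.
      assert (INR j <= INR k) by (apply le_INR; lia). nra.
    + apply bsum_eq_zero_tail; intros j Hj; unfold ev.
      * rewrite <- (Nat.succ_pred_pos j) by lia. rewrite pp_neg. unfold Rdiv. rewrite Rmult_0_l. apply bscal_0.
        rewrite (Nat.succ_pred_pos j) by lia. assert (INR (S k) <= INR j) by (apply le_INR; lia). rewrite S_INR in H. nra.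
      * destruct j. specialize (HJ O Hj). simpl in HJ. lra.
        rewrite pp_neg. unfold Rdiv. rewrite Rmult_0_l. apply bscal_0. left. apply HJ; auto.
Qed.

Lemma opow_neg {X : Banach} (Om : X -> X) j v : blinear Om ->
  opow (fun z => bopp (Om z)) j v = bscal ((-1) ^ j) (opow Om j v).
Proof.
  intros HL. induction j; simpl. rewrite bscal_1; auto.
  rewrite IHj, (proj2 HL), bopp_scal_comm. f_equal. ring.
Qed.

Lemma inv_linear {X : Banach} (Om Ominv : X -> X) : blinear Om ->
  (forall y, Om (Ominv y) = y) -> (forall y, Ominv (Om y) = y) -> blinear Ominv.
Proof.
  intros HL H1 H2. split.
  intros x y. rewrite <- (H1 x) at 1. rewrite <- (H1 y) at 1. rewrite <- (proj1 HL), H2. auto.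
  intros a x. rewrite <- (H1 x) at 1. rewrite <- (proj2 HL), H2. auto.
Qed.

Lemma bsum_pairs {X : Banach} N (F : nat -> X) :
  bsum (2 * N) F = bsum N (fun m => badd (F (2 * m)%nat) (F (S (2 * m)))).
Proof.
  induction N. simpl. auto.
  replace (2 * S N)%nat with (S (S (2 * N))) by lia.
  change (bsum (S (S (2*N))) F) with (badd (badd (bsum (2*N) F) (F (2*N)%nat)) (F (S (2*N)))).
  rewrite IHN. change (bsum (S N) ?G) with (badd (bsum N G) (G N)). cbv beta. rewrite badd_assoc. auto.
Qed.

Lemma x2_kern {X : Banach} (Om Ominv : X -> X) tau M u v :
  blinear Om -> (forall y, Om (Ominv y) = y) -> (forall y, Ominv (Om y) = y) -> tau > 0 ->
  u <= INR M * (2 * tau) -> x2 tau Om Ominv u v = kern Om tau M u v.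
Proof.
  intros HL H1 H2 Ht Hu. pose proof (inv_linear Om Ominv HL H1 H2) as HLi.
  unfold x2. destruct (Rlt_dec u (- tau)) as [Hlt|Hge].
  - rewrite kern_neg by lra. unfold exp_tau. destruct (Rlt_dec u (- tau)); [|lra].
    destruct (Rlt_dec u (- tau)); [|lra]. rewrite bsub_diag, blin_zero by auto. apply bscal_zero.
  - rewrite <- (kern_M Om tau (S M) M) by (auto; lra).
    assert (HJ : forall j, (2 * S M <= j)%nat -> u - (INR j - 1) * tau < 0).
    { intros j Hj. apply le_INR in Hj. replace (INR (2 * S M)) with (2 * INR M + 2) in Hj by (rewrite mult_INR, (S_INR M); simpl; ring).
      assert ((INR j - 1 - INR M * 2) * tau > 0) by (apply Rmult_lt_0_compat; lra). lra. }
    assert (Hu2 : - tau <= u) by (apply Rnot_lt_le; auto).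
    rewrite (exp_formula tau Om (2 * S M) u v) by auto. rewrite (exp_formula tau (fun z => bopp (Om z)) (2 * S M) u v) by auto.
    rewrite <- bsum_sub, (bsum_lin Ominv) by auto. rewrite bsum_scal, bsum_pairs.
    unfold kern. apply bsum_ext. intros m _.
    rewrite !opow_neg by auto. rewrite !bscal_assoc. rewrite <- !bscal_sub_r.
    rewrite !(proj2 HLi). rewrite !bscal_assoc. rewrite pow_1_even, pow_1_odd.
    replace (1 / 2 * (ev tau (2 * m) u - ev tau (2 * m) u * 1)) with 0 by ring.
    rewrite bscal_0, badd_0l.
    change (opow Om (S (2 * m)) v) with (Om (opow Om (2 * m) v)). rewrite H2. f_equal.
    unfold ev, bm. replace (S (2 * m)) with (2 * m + 1)%nat by lia.
    replace (INR (2 * m + 1) - 1) with (INR m * 2) by (rewrite plus_INR, mult_INR; simpl; ring).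
    replace (INR m * 2 * tau) with (INR m * (2 * tau)) by ring. field.
    apply INR_fact_neq_0.
Qed.


Lemma is_RInt_ext {X : Banach} (g h : R -> X) a b I :
  (forall s, a <= s <= b -> g s = h s) -> is_RInt h a b I -> is_RInt g a b I.
Proof.
  intros E H0. apply is_RInt_tagged. pose proof (proj1 (is_RInt_tagged _ _ _ _) H0) as H.
  intros eps Heps. destruct (H eps Heps) as [d [Hd K]]. exists d. split; auto.
  intros n p xi Ht. replace (RS g n p xi) with (RS h n p xi). apply K; auto.
  unfold RS. apply bsum_ext. intros k Hk. rewrite E; auto.
  pose proof Ht as [_ [_ T]]. destruct (T k Hk) as [Tk _].
  pose proof (tagged_range _ _ _ _ _ _ Ht k ltac:(lia)). pose proof (tagged_range _ _ _ _ _ _ Ht (S k) ltac:(lia)). lra.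
Qed.

Lemma vid1 {X : Banach} a b c (u w z : X) :
  badd (badd (bscal (- a) u) (bscal b w)) (badd (bscal (- c) z) (bscal a u)) = bsub (bscal b w) (bscal c z).
Proof.
  rewrite (badd_comm (bscal (- c) z)), badd_swap. rewrite <- bscal_distr_r.
  replace (- a + a) with 0 by ring. rewrite bscal_0, badd_0l. unfold bsub. rewrite bopp_scal_comm. auto.
Qed.

Lemma vid2 {X : Banach} (F C B : X) : badd (bsub (badd F C) B) (bsub B C) = F.
Proof. rewrite bsub_chain. apply badd_sub_cancel. Qed.

Lemma y1_zero {X : Banach} (y y1 : R -> X) tau : tau > 0 ->
  deriv_on y (fun t => - 2 * tau <= t) y1 -> (forall t, - 2 * tau <= t <= 0 -> y t = bzero) -> y1 0 = bzero.
Proof.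
  intros Ht Dy Yz. symmetry. apply bnorm_small_eq. intros eps Heps.
  destruct (Dy 0 ltac:(lra) eps Heps) as [d [Hd K]].
  set (s := - Rmin d (2 * tau) / 2).
  assert (Hs : - 2 * tau <= s < 0 /\ Rabs (s - 0) < d).
  { pose proof (Rmin_l d (2 * tau)). pose proof (Rmin_r d (2 * tau)). pose proof (Rmin_pos d (2 * tau) Hd ltac:(lra)).
    unfold s. split. lra. rewrite Rminus_0_r, Rabs_left; lra. }
  specialize (K s ltac:(lra) ltac:(lra) (proj2 Hs)). rewrite !Yz in K by lra.
  rewrite bsub_diag, bscal_zero in K. auto.
Qed.

Lemma formula {X : Banach} (Om Ominv : X -> X) (tau : R) (f y : R -> X) :
  blinear Om -> bbounded Om ->
  (forall y, Om (Ominv y) = y) -> (forall y, Ominv (Om y) = y) ->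
  tau > 0 -> cont_on f (fun t => 0 <= t) -> classical_solution tau Om f y ->
  forall t, 0 <= t -> is_RInt (fun s => x2 tau Om Ominv (t - s) (f s)) 0 t (y t).
Proof.
  intros HL HB H1 H2 Htau Hf Hsol t Ht.
  unfold classical_solution in Hsol. cbv zeta in Hsol.
  destruct Hsol as [y1 [y2n [y2p [Dy [Cy1 [_ [_ [Dy1 [Cy2p [Eq Yz]]]]]]]]]].
  assert (HopL : forall k, blinear (opow Om k)) by (intros; apply opow_linear; auto).
  assert (HopB : forall k, bbounded (opow Om k)) by (intros; apply opow_bounded; auto).
  assert (Y2 : forall s, 0 <= s -> y2p s = badd (f s) (Om (Om (y (s - 2 * tau))))).
  { intros s Hs. rewrite <- (Eq s Hs). symmetry. apply bsub_add_cancel. }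
  assert (Y10 : y1 0 = bzero) by (eapply y1_zero; eauto).
  assert (Cy : cont_on y (fun t => - 2 * tau <= t)) by (eapply deriv_cont; eauto).
  set (N := NN tau t). assert (HN : t <= INR N * (2 * tau)) by (apply NN_spec; auto).
  set (D := fun s => 0 <= s <= t).
  set (A := fun m => opow Om (2 * m)).
  assert (HAL : forall m, blinear (A m)) by (intros; apply HopL).
  assert (HAB : forall m, bbounded (A m)) by (intros; apply HopB).
  set (Phi := fun s => bsum (S N) (fun m => A m (badd (bscal (bm tau m (t - s)) (y1 s)) (bscal (b1m tau m (t - s)) (y s))))).
  set (Phi' := fun s => bsum (S N) (fun m => A m (bsub (bscal (bm tau m (t - s)) (y2p s)) (bscal (chi tau t m s) (y s))))).
  assert (DPhi : deriv_on Phi D Phi').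
  { apply deriv_bsum. intros m _. apply deriv_op; auto.
    set (GG := fun s => badd (bscal (bm tau m (t - s)) (y1 s)) (bscal (b1m tau m (t - s)) (y s))).
    apply (deriv_ext GG GG _ (fun s => badd (badd (bscal (- b1m tau m (t - s)) (y1 s)) (bscal (bm tau m (t - s)) (y2p s)))
                                         (badd (bscal (- chi tau t m s) (y s)) (bscal (b1m tau m (t - s)) (y1 s))))).
    intros; auto. intros s _. symmetry. apply vid1.
    apply deriv_add; apply deriv_scal_fun.
    apply phi_rder. eapply deriv_sub_set. apply Dy1. unfold D; intros; lra.
    apply psi_rder. eapply deriv_sub_set. apply Dy. unfold D; intros; lra. }
  set (q := fun r => Om (Om (kern Om tau N (t - 2 * tau - r) (y r)))).
  assert (Ckern : forall c0 (w : R -> X) E, cont_on w E -> cont_on (fun r => kern Om tau N (c0 - r) (w r)) E).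
  { intros c0 w E Cw. unfold kern. apply (cont_bsum N (fun m r => bscal (bm tau m (c0 - r)) (opow Om (2 * m) (w r)))).
    intros m _. apply cont_scal_fun. intros x _. apply (rlim_cont (fun r => bm tau m (c0 - r))). apply bm_cont.
    apply cont_op; auto. }
  assert (Cq : cont_on q (fun r => - 2 * tau <= r)).
  { unfold q. apply cont_op; auto. apply cont_op; auto. }
  destruct (bprimitive q (- 2 * tau) Cq) as [Qk [_ [DQk _]]].
  set (K := fun s => bsub (Qk s) (Qk (s - 2 * tau))).
  assert (DK : deriv_on K D (fun s => bsub (q s) (q (s - 2 * tau)))).
  { apply deriv_sub. eapply deriv_sub_set. apply DQk. unfold D; intros; lra.
    apply (deriv_shift Qk q (fun r => - 2 * tau <= r)); auto. unfold D; intros; lra. }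
  set (g := fun s => kern Om tau N (t - s) (f s)).
  assert (DG : deriv_on (fun s => badd (Phi s) (K s)) D g).
  { apply (deriv_ext _ (fun s => badd (Phi s) (K s)) _ (fun s => badd (Phi' s) (bsub (q s) (q (s - 2 * tau))))).
    intros; auto. 2: apply deriv_add; auto.
    intros s Hs. unfold D in Hs. symmetry. unfold g.
    assert (E1 : Phi' s = bsub (kern Om tau N (t - s) (y2p s)) (Om (Om (kern Om tau N (t - s - 2 * tau) (y s))))).
    { unfold Phi'. rewrite (bsum_ext _ _ (fun m => bsub (bscal (bm tau m (t - s)) (A m (y2p s))) (A m (bscal (chi tau t m s) (y s))))).
      rewrite bsum_sub. f_equal.
      rewrite <- (kern_M Om tau (S N) N (t - s)) by (auto; lra). auto.
      rewrite bsum_shift. simpl chi. rewrite bscal_0, (blin_zero (A O)), badd_0l by auto.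
      unfold kern. rewrite !(bsum_lin Om) by auto. apply bsum_ext. intros m _.
      unfold A. rewrite (proj2 (HopL _)). replace (2 * S m)%nat with (S (S (2 * m))) by lia.
      rewrite (proj2 HL), (proj2 HL). auto.
      intros m _. unfold A. rewrite blin_sub, (proj2 (HopL _)); auto. }
    rewrite E1, Y2 by lra. rewrite kern_add, !kern_op by auto. unfold q.
    replace (t - 2 * tau - s) with (t - s - 2 * tau) by ring.
    replace (t - 2 * tau - (s - 2 * tau)) with (t - s) by ring.
    apply vid2. }
  assert (Cg : cont_on g D).
  { unfold g. apply Ckern. eapply cont_sub_set. apply Hf. unfold D; intros; lra. }
  pose proof (ftc _ g 0 t Ht DG Cg) as HI.
  assert (Qz1 : Qk 0 = Qk (- 2 * tau)).
  { apply (deriv_zero_const Qk (fun r => - 2 * tau <= r <= 0)). lra. intros; lra.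
    apply (deriv_ext _ Qk _ q). intros; auto. intros s Hs. symmetry. unfold q.
    rewrite Yz by lra. rewrite kern_zero, !(blin_zero Om) by auto. auto.
    eapply deriv_sub_set. apply DQk. intros; lra. }
  assert (Qz2 : Qk t = Qk (t - 2 * tau)).
  { apply (deriv_zero_const Qk (fun r => t - 2 * tau <= r <= t)). lra. intros; lra.
    apply (deriv_ext _ Qk _ q). intros; auto. intros s Hs. symmetry. unfold q.
    rewrite kern_neg by lra. rewrite !(blin_zero Om) by auto. auto.
    eapply deriv_sub_set. apply DQk. intros; lra. }
  assert (Phit : Phi t = y t).
  { unfold Phi. rewrite bsum_shift. rewrite bsum_zero. rewrite badd_0. unfold A. simpl opow.
    rewrite Rminus_diag. rewrite bm_zero by lra. rewrite b10_val, bscal_0, bscal_1, badd_0l. auto.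
    intros m _. rewrite Rminus_diag. rewrite bm_zero, b1m_zero by (auto; lia || lra).
    rewrite !bscal_0, badd_0. apply blin_zero. auto. }
  assert (Phi0 : Phi 0 = bzero).
  { unfold Phi. apply bsum_zero. intros m _. rewrite Y10, Yz by lra. rewrite !bscal_zero, badd_0. apply blin_zero. auto. }
  assert (Eval : bsub (badd (Phi t) (K t)) (badd (Phi 0) (K 0)) = y t).
  { rewrite Phit, Phi0. unfold K. rewrite Qz2, Qz1. replace (0 - 2 * tau) with (- 2 * tau) by ring.
    rewrite !bsub_diag, badd_0l, badd_0. apply bsub_0r. }
  cbv beta in HI. rewrite Eval in HI. apply (is_RInt_ext _ g). intros s Hs. unfold g. apply x2_kern; auto. lra.
  exact HI.
Qed.


Theorem mainTheorem6 (X : Banach) (Om Ominv : X -> X) (tau : R) (f : R -> X) :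
  blinear Om -> bbounded Om ->
  (forall y, Om (Ominv y) = y) -> (forall y, Ominv (Om y) = y) ->
  tau > 0 ->
  cont_on f (fun t => 0 <= t) ->
  (exists x : R -> X, classical_solution tau Om f x) /\
  (forall x : R -> X, classical_solution tau Om f x ->
     (forall t, - 2 * tau <= t <= 0 -> x t = bzero) /\
     (forall t, 0 <= t -> is_RInt (fun s => x2 tau Om Ominv (t - s) (f s)) 0 t (x t))).
Proof.
  intros HL HB H1 H2 Htau Hf. split.
  - apply existence; auto.
  - intros x Hx. split.
    + intros t Ht. unfold classical_solution in Hx. cbv zeta in Hx.
      destruct Hx as [_ [_ [_ [_ [_ [_ [_ [_ [_ [_ Yz]]]]]]]]]]. apply Yz; auto.
    + apply formula; auto.
Qed.
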